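(* Let $n,m\ge 1$ be integers and let $V(n,m)=\{1,\dots,n\}\times\{1,\dots,m\}\subset\mathbb{R}^2$. The minimum number of segments of a (possibly self-crossing) polygonal path covering $V(n,m)$ is $2\min(n,m)-2$ if $n=m\ge 3$, and $2\min(n,m)-1$ otherwise. The minimum number of segments of a noncrossing polygonal path covering $V(n,m)$ is $2\min(n,m)-1$ for all $n,m\ge 1$.
   Context: $V(n,m)$ is the vertex set of the $n\times m$ orthogonal unit grid ($n$ columns, $m$ rows). A polygonal path is a sequence of points $p_0,p_1,\dots,p_k$ in the plane ($k\ge 1$) together with the closed straight-line segments $p_{i-1}p_i$, $i=1,\dots,k$, each of positive length; its number of segments is $k$. The turning points $p_i$ may be arbitrary points of the plane (not necessarily grid points). The path covers a point set $P$ if every point of $P$ lies on the union of its segments. The path is noncrossing if any two of its segments intersect only when they are consecutive, and then only in their common endpoint. *)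

(* Defs.v *)
From Stdlib Require Import Reals Arith.
Open Scope R_scope.

Definition point := (R * R)%type.

Definition on_seg (a b x : point) : Prop :=
  exists t : R, 0 <= t <= 1 /\
    x = (fst a + t * (fst b - fst a), snd a + t * (snd b - snd a)).

(* A polygonal path with k segments is given by points p 0, ..., p k
   (only these values of p matter); segment i (1 <= i <= k) is
   [p (i-1), p i]; k >= 1 and every segment has positive length. *)
Definition polypath (k : nat) (p : nat -> point) : Prop :=
  (1 <= k)%nat /\ forall i : nat, (1 <= i <= k)%nat -> p (i - 1)%nat <> p i.

Definition covers (k : nat) (p : nat -> point) (P : point -> Prop) : Prop :=
  forall x, P x -> exists i : nat, (1 <= i <= k)%nat /\ on_seg (p (i - 1)%nat) (p i) x.

Definition noncrossing (k : nat) (p : nat -> point) : Prop :=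
  forall i j : nat, (1 <= i)%nat -> (i < j)%nat -> (j <= k)%nat ->
    forall x, on_seg (p (i - 1)%nat) (p i) x -> on_seg (p (j - 1)%nat) (p j) x ->
      j = S i /\ x = p i.

Definition grid (n m : nat) (x : point) : Prop :=
  exists a b : nat, (1 <= a <= n)%nat /\ (1 <= b <= m)%nat /\ x = (INR a, INR b).

Definition min_cover_segments (P : point -> Prop) (s : nat) : Prop :=
  (exists p, polypath s p /\ covers s p P) /\
  (forall k p, polypath k p -> covers k p P -> (s <= k)%nat).

Definition min_noncrossing_cover_segments (P : point -> Prop) (s : nat) : Prop :=
  (exists p, polypath s p /\ noncrossing s p /\ covers s p P) /\
  (forall k p, polypath k p -> noncrossing k p -> covers k p P -> (s <= k)%nat).

(* Main.v *)
Require Import Defs.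
From Stdlib Require Import Reals Arith.
From Stdlib Require Import Lra Lia Psatz List Sorting.Sorted ClassicalEpsilon Classical.
Import ListNotations.

Open Scope R_scope.

Definition lerp (a b : point) (t : R) : point :=
  (fst a + t * (fst b - fst a), snd a + t * (snd b - snd a)).

Lemma on_seg_lerp a b x : on_seg a b x <-> exists t, 0 <= t <= 1 /\ x = lerp a b t.
Proof. reflexivity. Qed.

Definition inR (x0 x1 y0 y1 : R) (P : point) :=
  x0 <= fst P <= x1 /\ y0 <= snd P <= y1.
Definition onbd (x0 x1 y0 y1 : R) (P : point) :=
  fst P = x0 \/ fst P = x1 \/ snd P = y0 \/ snd P = y1.

Definition cross (a b c : point) : R :=
  (fst b - fst a) * (snd c - snd a) - (snd b - snd a) * (fst c - fst a).

Lemma pair_eq (a b : point) : fst a = fst b -> snd a = snd b -> a = b.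
Proof. destruct a, b; simpl; intros; subst; auto. Qed.

Lemma mid_aux (u w l c : R) : 0 < l < 1 -> c <= u -> c <= w -> u + l * (w - u) = c -> u = w.
Proof. intros Hl H1 H2 H. nra. Qed.
Lemma mid_aux' (u w l c : R) : 0 < l < 1 -> u <= c -> w <= c -> u + l * (w - u) = c -> u = w.
Proof. intros Hl H1 H2 H. nra. Qed.

Lemma mid x0 x1 y0 y1 U W l :
  inR x0 x1 y0 y1 U -> inR x0 x1 y0 y1 W -> 0 < l < 1 ->
  onbd x0 x1 y0 y1 (lerp U W l) -> fst U = fst W \/ snd U = snd W.
Proof.
  unfold inR, onbd, lerp; simpl; intros [[a1 a2][a3 a4]] [[b1 b2][b3 b4]] Hl H.
  destruct H as [H|[H|[H|H]]].
  - left; eapply mid_aux; eauto; lra.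
  - left; eapply mid_aux'; eauto; lra.
  - right; eapply mid_aux; eauto; lra.
  - right; eapply mid_aux'; eauto; lra.
Qed.

Lemma cross0_lerp U W Z : fst U <> fst W -> cross U W Z = 0 ->
  Z = lerp U W ((fst Z - fst U) / (fst W - fst U)).
Proof.
  unfold cross, lerp; intros H C. destruct U as [u1 u2], W as [w1 w2], Z as [z1 z2]; simpl in *.
  assert (w1 - u1 <> 0) by lra.
  f_equal.
  - field; auto.
  - assert (z2 - u2 = (w2 - u2) * (z1 - u1) / (w1 - u1)).
    { apply (Rmult_eq_reg_l (w1 - u1)); auto. field_simplify; auto. lra. }
    replace z2 with (u2 + (z2 - u2)) at 1 by ring. rewrite H1. field; auto.
Qed.

Lemma T3 x0 x1 y0 y1 U W Z :
  inR x0 x1 y0 y1 U -> inR x0 x1 y0 y1 W -> inR x0 x1 y0 y1 Z ->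
  onbd x0 x1 y0 y1 U -> onbd x0 x1 y0 y1 W -> onbd x0 x1 y0 y1 Z ->
  fst U <> fst W -> snd U <> snd W -> cross U W Z = 0 -> Z <> U -> Z <> W -> False.
Proof.
  intros iU iW iZ bU bW bZ h1 h2 C nU nW.
  pose proof (cross0_lerp U W Z h1 C) as E.
  set (t := (fst Z - fst U) / (fst W - fst U)) in E.
  destruct U as [u1 u2], W as [w1 w2], Z as [z1 z2]; unfold lerp in E; simpl in *.
  injection E; intros Ey Ex.
  assert (t <> 0). { intro H0; apply nU; rewrite H0 in Ex, Ey; f_equal; lra. }
  assert (t <> 1). { intro; apply nW; rewrite H0 in Ex, Ey; f_equal; lra. }
  destruct (Rlt_or_le t 0) as [Ht|Ht].
  - (* U between Z and W *)
    set (l := - t / (1 - t)).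
    assert (Hl : 0 < l < 1). { unfold l; split.
      apply Rdiv_lt_0_compat; lra. apply (Rmult_lt_reg_r (1 - t)); [lra|]. field_simplify; lra. }
    assert (Hm : lerp (z1,z2) (w1,w2) l = (u1,u2)).
    { unfold lerp, l; simpl; f_equal; rewrite Ex || rewrite Ey; field; lra. }
    pose proof (mid x0 x1 y0 y1 (z1,z2) (w1,w2) l iZ iW Hl) as M.
    rewrite Hm in M. destruct (M bU) as [M1|M1]; simpl in M1.
    + apply h1. assert ((t - 1) * (w1 - u1) = 0) by lra.
      apply Rmult_integral in H1; destruct H1; lra.
    + apply h2. assert ((t - 1) * (w2 - u2) = 0) by lra.
      apply Rmult_integral in H1; destruct H1; lra.
  - destruct (Rle_or_lt t 1) as [Ht'|Ht'].
    + assert (Hl : 0 < t < 1) by lra.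
      pose proof (mid x0 x1 y0 y1 (u1,u2) (w1,w2) t iU iW Hl) as M.
      assert (Hm : lerp (u1,u2) (w1,w2) t = (z1,z2)) by (unfold lerp; simpl; f_equal; lra).
      rewrite Hm in M. destruct (M bZ); simpl in *; auto.
    + set (l := / t).
      assert (Hl : 0 < l < 1). { unfold l; split. apply Rinv_0_lt_compat; lra.
        apply (Rmult_lt_reg_r t); [lra|]. field_simplify; lra. }
      assert (Hm : lerp (u1,u2) (z1,z2) l = (w1,w2)).
      { unfold lerp, l; simpl; f_equal; rewrite Ex || rewrite Ey; field; lra. }
      pose proof (mid x0 x1 y0 y1 (u1,u2) (z1,z2) l iU iZ Hl) as M.
      rewrite Hm in M. destruct (M bW) as [M1|M1]; simpl in M1.
      * apply H. assert (t * (w1 - u1) = 0) by lra.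
        apply Rmult_integral in H1; destruct H1; lra.
      * apply H. assert (t * (w2 - u2) = 0) by lra.
        apply Rmult_integral in H1; destruct H1; lra.
Qed.

Lemma ear (M : nat) (mu : nat -> nat) :
  (0 < M)%nat ->
  (forall s, (s < M)%nat -> (mu s < M)%nat) ->
  (forall s, (s < M)%nat -> mu (mu s) = s) ->
  (forall s, (s < M)%nat -> mu s <> s) ->
  (forall s, (s < M)%nat -> mu s <> S s) ->
  (forall i k, (i < k)%nat -> (k < mu i)%nat -> (mu i < mu k)%nat -> (mu k < M)%nat -> False) -> False.
Proof.
  intros HM Hr Hi Hn Ha Hc.
  assert (Main : forall d i, (i < M)%nat -> (i < mu i)%nat -> (mu i - i <= d)%nat -> False).
  { induction d as [|d IH]; intros i iM ilt hd.
    - lia.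
    - assert (mu i <> S i) by (apply Ha; auto).
      assert (Hmi := Hr i iM).
      set (k := S i).
      assert (kM : (k < M)%nat) by (unfold k; lia).
      assert (Hmk := Hr k kM).
      destruct (Nat.lt_total (mu k) i) as [c1|[c1|c1]].
      + assert (Hk : mu (mu k) = k) by auto.
        apply (Hc (mu k) i); rewrite ?Hk; unfold k in *; lia.
      + assert (mu i = k) by (rewrite <- c1; apply Hi; auto). unfold k in *; lia.
      + assert (mu k <> k) by (apply Hn; auto).
        destruct (Nat.lt_total (mu k) (mu i)) as [c2|[c2|c2]].
        * apply (IH k); auto; unfold k in *; lia.
        * assert (k = i) by (rewrite <- (Hi k kM), <- (Hi i iM); congruence). unfold k in *; lia.
        * apply (Hc i k); unfold k in *; lia. }
  assert (H0 : (0 < M)%nat) by auto.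
  assert (mu 0%nat <> 0%nat) by (apply Hn; auto).
  apply (Main (mu 0%nat) 0%nat); auto; lia.
Qed.

Lemma chord_on x0 x1 y0 y1 U W X :
  inR x0 x1 y0 y1 U -> inR x0 x1 y0 y1 W -> inR x0 x1 y0 y1 X ->
  onbd x0 x1 y0 y1 U -> onbd x0 x1 y0 y1 W ->
  fst U <> fst W -> snd U <> snd W -> cross U W X = 0 -> on_seg U W X.
Proof.
  intros iU iW iX bU bW h1 h2 C.
  pose proof (cross0_lerp U W X h1 C) as E.
  set (t := (fst X - fst U) / (fst W - fst U)) in E.
  exists t. split; auto.
  destruct U as [u1 u2], W as [w1 w2], X as [z1 z2]; unfold lerp in E; simpl in *.
  injection E; intros Ey Ex.
  destruct (Rlt_or_le t 0) as [Ht|Ht].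
  - exfalso.
    set (l := - t / (1 - t)).
    assert (Hl : 0 < l < 1). { unfold l; split.
      apply Rdiv_lt_0_compat; lra. apply (Rmult_lt_reg_r (1 - t)); [lra|]. field_simplify; lra. }
    assert (Hm : lerp (z1,z2) (w1,w2) l = (u1,u2)).
    { unfold lerp, l; simpl; f_equal; rewrite Ex || rewrite Ey; field; lra. }
    pose proof (mid x0 x1 y0 y1 (z1,z2) (w1,w2) l iX iW Hl) as M.
    rewrite Hm in M. destruct (M bU) as [M1|M1]; simpl in M1.
    + apply h1. assert ((t - 1) * (w1 - u1) = 0) by lra.
      apply Rmult_integral in H; destruct H; lra.
    + apply h2. assert ((t - 1) * (w2 - u2) = 0) by lra.
      apply Rmult_integral in H; destruct H; lra.
  - split; auto. destruct (Rle_or_lt t 1) as [Ht'|Ht']; auto. exfalso.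
    set (l := / t).
    assert (Hl : 0 < l < 1). { unfold l; split. apply Rinv_0_lt_compat; lra.
      apply (Rmult_lt_reg_r t); [lra|]. field_simplify; lra. }
    assert (Hm : lerp (u1,u2) (z1,z2) l = (w1,w2)).
    { unfold lerp, l; simpl; f_equal; rewrite Ex || rewrite Ey; field; lra. }
    pose proof (mid x0 x1 y0 y1 (u1,u2) (z1,z2) l iU iX Hl) as M.
    rewrite Hm in M. destruct (M bW) as [M1|M1]; simpl in M1.
    + assert (t * (w1 - u1) = 0) by lra.
      apply Rmult_integral in H; destruct H; lra.
    + assert (t * (w2 - u2) = 0) by lra.
      apply Rmult_integral in H; destruct H; lra.
Qed.

Open Scope R_scope.

Section Pos.
Variables (P Q : nat) (al be : nat -> nat).
Hypothesis alm : forall r r', (r < r')%nat -> (r' < P + 2)%nat -> (al r < al r')%nat.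
Hypothesis bem : forall r r', (r < r')%nat -> (r' < Q + 2)%nat -> (be r < be r')%nat.

Definition MM : nat := (2 * P + 2 * Q + 4)%nat.

Definition ci (s : nat) : nat :=
  if (s <? Q + 2)%nat then 0%nat
  else if (s <? Q + P + 3)%nat then (s - (Q + 1))%nat
  else if (s <? 2 * Q + P + 4)%nat then (P + 1)%nat
  else (2 * Q + 2 * P + 4 - s)%nat.
Definition ri (s : nat) : nat :=
  if (s <? Q + 2)%nat then s
  else if (s <? Q + P + 3)%nat then (Q + 1)%nat
  else if (s <? 2 * Q + P + 4)%nat then (2 * Q + P + 3 - s)%nat
  else 0%nat.

Definition ax r := INR (al r).
Definition by_ r := INR (be r).
Definition Pos (s : nat) : point := (ax (ci s), by_ (ri s)).
Definition x0 := ax 0. Definition x1 := ax (P + 1).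
Definition y0 := by_ 0. Definition y1 := by_ (Q + 1).

Ltac crush := unfold MM, ci, ri in *;
  repeat match goal with
  | |- context [(?a <? ?b)%nat] => destruct (Nat.ltb_spec a b)
  | H : context [(?a <? ?b)%nat] |- _ => destruct (Nat.ltb_spec a b)
  end; lia.

Lemma Rl s : (s < Q + 2)%nat -> ci s = 0%nat /\ ri s = s.
Proof. intros; split; crush. Qed.
Lemma Rt s : (Q + 2 <= s < Q + P + 3)%nat -> ci s = (s - (Q + 1))%nat /\ ri s = (Q + 1)%nat.
Proof. intros; split; crush. Qed.
Lemma Rr s : (Q + P + 3 <= s < 2 * Q + P + 4)%nat -> ci s = (P + 1)%nat /\ ri s = (2 * Q + P + 3 - s)%nat.
Proof. intros; split; crush. Qed.
Lemma Rb s : (2 * Q + P + 4 <= s)%nat -> ci s = (2 * Q + 2 * P + 4 - s)%nat /\ ri s = 0%nat.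
Proof. intros; split; crush. Qed.

Ltac reg x := let h1 := fresh "h" in let h2 := fresh "h" in let h3 := fresh "h" in
  let e1 := fresh "e" in let e2 := fresh "e" in
  destruct (Nat.lt_ge_cases x (Q + 2)) as [h1|h1];
  [ destruct (Rl x h1) as [e1 e2]; rewrite e1, e2 in *
  | destruct (Nat.lt_ge_cases x (Q + P + 3)) as [h2|h2];
    [ destruct (Rt x (conj h1 h2)) as [e1 e2]; rewrite e1, e2 in *
    | destruct (Nat.lt_ge_cases x (2 * Q + P + 4)) as [h3|h3];
      [ destruct (Rr x (conj h2 h3)) as [e1 e2]; rewrite e1, e2 in *
      | destruct (Rb x h3) as [e1 e2]; rewrite e1, e2 in * ]]].

Ltac dsolve := lazymatch goal with
  | |- _ /\ _ => split; dsolve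
  | |- _ \/ _ => first [left; dsolve | right; dsolve]
  | _ => lia end.

Lemma I1 s : (s < MM)%nat -> (ci s < P + 2)%nat /\ (ri s < Q + 2)%nat.
Proof. unfold MM; intros; reg s; dsolve. Qed.
Lemma I2 s : (s < MM)%nat -> ci s = 0%nat \/ ci s = (P + 1)%nat \/ ri s = 0%nat \/ ri s = (Q + 1)%nat.
Proof. unfold MM; intros; reg s; dsolve. Qed.
Lemma I3 s t : (s < MM)%nat -> (t < MM)%nat -> ci s = ci t -> ri s = ri t -> s = t.
Proof. unfold MM; intros hs ht; reg s; reg t; dsolve. Qed.
Lemma I4 s : (S s < MM)%nat ->
  (ci s = ci (S s) /\ (ci s = 0 \/ ci s = P + 1)%nat /\ (ri (S s) = S (ri s) \/ ri s = S (ri (S s)))) \/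
  (ri s = ri (S s) /\ (ri s = 0 \/ ri s = Q + 1)%nat /\ (ci (S s) = S (ci s) \/ ci s = S (ci (S s)))).
Proof. unfold MM; intros; reg s; reg (S s); dsolve. Qed.
Lemma I5 j : (0 < j)%nat -> (S j < MM)%nat -> j <> (Q + 1)%nat -> j <> (Q + P + 2)%nat -> j <> (2 * Q + P + 3)%nat ->
  (ci (j-1) = ci j /\ ci j = ci (S j) /\ ((ri j = S (ri (j-1)) /\ ri (S j) = S (ri j)) \/
                                        (ri (j-1) = S (ri j) /\ ri j = S (ri (S j))))) \/
  (ri (j-1) = ri j /\ ri j = ri (S j) /\ ((ci j = S (ci (j-1)) /\ ci (S j) = S (ci j)) \/
                                        (ci (j-1) = S (ci j) /\ ci j = S (ci (S j))))).
Proof. unfold MM; intros; reg (j-1)%nat; reg j; reg (S j); dsolve. Qed.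
Lemma I6a : ci (Q + 1) = 0%nat /\ ri (Q + 1) = (Q + 1)%nat /\ ci Q = 0%nat /\ ri Q = Q
  /\ ci (Q + 2) = 1%nat /\ ri (Q + 2) = (Q + 1)%nat.
Proof. reg (Q + 1)%nat; reg Q; reg (Q + 2)%nat; dsolve. Qed.
Lemma I6b : ci (Q + P + 2) = (P + 1)%nat /\ ri (Q + P + 2) = (Q + 1)%nat /\ ci (Q + P + 1) = P /\ ri (Q + P + 1) = (Q + 1)%nat
  /\ ci (Q + P + 3) = (P + 1)%nat /\ ri (Q + P + 3) = Q.
Proof. reg (Q+P+2)%nat; reg (Q+P+1)%nat; reg (Q+P+3)%nat; dsolve. Qed.
Lemma I6c : (2 * Q + P + 4 < MM)%nat -> ci (2*Q+P+3) = (P + 1)%nat /\ ri (2*Q+P+3) = 0%nat /\ ci (2*Q+P+2) = (P+1)%nat /\ ri (2*Q+P+2) = 1%nat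
  /\ ci (2*Q+P+4) = P /\ ri (2*Q+P+4) = 0%nat.
Proof. unfold MM; intros; reg (2*Q+P+3)%nat; reg (2*Q+P+2)%nat; reg (2*Q+P+4)%nat; dsolve. Qed.

Lemma axlt r r' : (r < r')%nat -> (r' < P + 2)%nat -> ax r < ax r'.
Proof. intros; unfold ax; apply lt_INR; auto. Qed.
Lemma bylt r r' : (r < r')%nat -> (r' < Q + 2)%nat -> by_ r < by_ r'.
Proof. intros; unfold by_; apply lt_INR; auto. Qed.
Lemma axle r r' : (r <= r')%nat -> (r' < P + 2)%nat -> ax r <= ax r'.
Proof. intros. destruct (Nat.eq_dec r r'); [subst; lra|]. left; apply axlt; lia. Qed.
Lemma byle r r' : (r <= r')%nat -> (r' < Q + 2)%nat -> by_ r <= by_ r'.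
Proof. intros. destruct (Nat.eq_dec r r'); [subst; lra|]. left; apply bylt; lia. Qed.
Lemma axinj r r' : (r < P + 2)%nat -> (r' < P + 2)%nat -> ax r = ax r' -> r = r'.
Proof. intros a b c. destruct (Nat.lt_total r r') as [h|[h|h]]; auto;
  [pose proof (axlt r r' h b) | pose proof (axlt r' r h a)]; lra. Qed.
Lemma byinj r r' : (r < Q + 2)%nat -> (r' < Q + 2)%nat -> by_ r = by_ r' -> r = r'.
Proof. intros a b c. destruct (Nat.lt_total r r') as [h|[h|h]]; auto;
  [pose proof (bylt r r' h b) | pose proof (bylt r' r h a)]; lra. Qed.
Lemma axnb r t z : (S r < P + 2)%nat -> (t < P + 2)%nat -> ax r < z < ax (S r) -> z = ax t -> False.
Proof. intros h1 h2 [z1 z2] e; subst.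
  destruct (Nat.le_gt_cases t r).
  - pose proof (axle t r H ltac:(lia)); lra.
  - pose proof (axle (S r) t H ltac:(lia)); lra. Qed.
Lemma bynb r t z : (S r < Q + 2)%nat -> (t < Q + 2)%nat -> by_ r < z < by_ (S r) -> z = by_ t -> False.
Proof. intros h1 h2 [z1 z2] e; subst.
  destruct (Nat.le_gt_cases t r).
  - pose proof (byle t r H ltac:(lia)); lra.
  - pose proof (byle (S r) t H ltac:(lia)); lra. Qed.

Definition inRR := inR x0 x1 y0 y1.
Definition onbdR := onbd x0 x1 y0 y1.

Lemma Pos_in s : (s < MM)%nat -> inRR (Pos s).
Proof. intros h. destruct (I1 s h). unfold inRR, inR, Pos, x0, x1, y0, y1; simpl.
  repeat split; [apply axle|apply axle|apply byle|apply byle]; lia. Qed.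
Lemma Pos_bd s : (s < MM)%nat -> onbdR (Pos s).
Proof. intros h. unfold onbdR, onbd, Pos, x0, x1, y0, y1; simpl.
  destruct (I2 s h) as [e|[e|[e|e]]]; rewrite e; auto. Qed.
Lemma Pos_inj s t : (s < MM)%nat -> (t < MM)%nat -> Pos s = Pos t -> s = t.
Proof. intros hs ht e. destruct (I1 s hs), (I1 t ht). unfold Pos in e. injection e; intros e2 e1.
  apply I3; auto; [apply axinj|apply byinj]; auto. Qed.

Lemma cross_lerp U W A B l : cross U W (lerp A B l) = (1 - l) * cross U W A + l * cross U W B.
Proof. unfold cross, lerp; simpl; ring. Qed.

Lemma inR_lerp A B l : inRR A -> inRR B -> 0 <= l <= 1 -> inRR (lerp A B l).
Proof. unfold inRR, inR, lerp; simpl; intros [[a1 a2][a3 a4]] [[b1 b2][b3 b4]] hl.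
  repeat split; nra. Qed.

Lemma opp_sign a c l : 0 < l < 1 -> (1 - l) * a + l * c = 0 -> a <> 0 -> c <> 0 -> a * c < 0.
Proof. intros hl h ha hc.
  assert (a * (1 - l) = - (l * c)) by lra.
  assert (a * c * (1 - l) = - (l * (c * c))) by (rewrite Rmult_assoc, (Rmult_comm c), <- Rmult_assoc, H; ring).
  assert (0 < c * c) by (apply Rsqr_pos_lt; auto).
  assert (0 < l * (c * c)) by (apply Rmult_lt_0_compat; lra).
  destruct (Rlt_or_le (a * c) 0); auto.
  assert (0 <= a * c * (1 - l)) by (apply Rmult_le_pos; lra). lra. Qed.

Lemma between_lerp (a b c : R) : (a < b < c \/ c < b < a) ->
  exists l, 0 < l < 1 /\ b = a + l * (c - a).
Proof. intros h. exists ((b - a) / (c - a)). split.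
  - destruct h as [[h1 h2]|[h1 h2]]; split.
    + apply Rdiv_lt_0_compat; lra.
    + apply (Rmult_lt_reg_r (c - a)); [lra|]. field_simplify; lra.
    + apply Rdiv_neg_neg; lra.
    + apply (Rmult_lt_reg_r (a - c)); [lra|].
      replace ((b - a) / (c - a) * (a - c)) with (a - b) by (field; lra). lra.
  - field. destruct h; lra. Qed.

Section Chord.
Variables i j : nat.
Hypothesis hi : (i < MM)%nat.
Hypothesis hj : (j < MM)%nat.
Hypothesis dx : fst (Pos i) <> fst (Pos j).
Hypothesis dy : snd (Pos i) <> snd (Pos j).

Definition g s := cross (Pos i) (Pos j) (Pos s).

Lemma gZ s : (s < MM)%nat -> s <> i -> s <> j -> g s <> 0.
Proof. intros hs n1 n2 e.
  apply (T3 x0 x1 y0 y1 (Pos i) (Pos j) (Pos s)); try (apply Pos_in; auto); try (apply Pos_bd; auto); auto.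
  intro E; apply n1; apply Pos_inj; auto. intro E; apply n2; apply Pos_inj; auto. Qed.

Lemma gC s : (S s < MM)%nat -> s <> i -> s <> j -> S s <> i -> S s <> j -> g s * g (S s) > 0.
Proof. intros hs n1 n2 n3 n4.
  assert (g1 := gZ s ltac:(lia) n1 n2). assert (g2 := gZ (S s) hs n3 n4).
  destruct (Rlt_or_le 0 (g s * g (S s))) as [h|h]; [lra|exfalso].
  assert (h' : g s * g (S s) < 0).
  { destruct h; auto. apply Rmult_integral in H; tauto. }
  set (l := g s / (g s - g (S s))).
  assert (Hl : 0 < l < 1).
  { unfold l. destruct (Rlt_or_le 0 (g s)) as [a|a].
    - assert (g (S s) < 0) by nra. split. apply Rdiv_lt_0_compat; lra.
      apply (Rmult_lt_reg_r (g s - g (S s))); [lra|]. field_simplify; lra.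
    - assert (g s < 0) by lra. assert (0 < g (S s)) by nra.
      split. apply Rdiv_neg_neg; lra.
      apply (Rmult_lt_reg_r (g (S s) - g s)); [lra|].
      replace (g s / (g s - g (S s)) * (g (S s) - g s)) with (- g s) by (field; lra). lra. }
  set (X := lerp (Pos s) (Pos (S s)) l).
  assert (cX : cross (Pos i) (Pos j) X = 0).
  { assert (Hd : g s - g (S s) <> 0).
    { intro E. assert (E2 : g s = g (S s)) by lra. rewrite E2 in h'. nra. }
    unfold X; rewrite cross_lerp. fold (g s) (g (S s)). unfold l; field. auto. }
  assert (iX : inRR X) by (apply inR_lerp; [apply Pos_in; lia | apply Pos_in; lia | lra]).
  destruct (I1 s ltac:(lia)) as [c1 r1]. destruct (I1 (S s) hs) as [c2 r2].
  destruct (I1 i hi) as [ci1 ri1]. destruct (I1 j hj) as [cj1 rj1].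
  assert (HX : onbdR X /\ X <> Pos i /\ X <> Pos j).
  { unfold X, onbdR, onbd, Pos, lerp, x0, x1, y0, y1; simpl.
    destruct (I4 s hs) as [[e1 [e2 e3]]|[e1 [e2 e3]]].
    - rewrite <- e1. replace (ax (ci s) + l * (ax (ci s) - ax (ci s))) with (ax (ci s)) by ring.
      split. destruct e2 as [e2|e2]; rewrite e2; auto.
      split; intro E; injection E; intros E2 E1.
      + destruct e3 as [e3|e3].
        * apply (bynb (ri s) (ri i) (by_ (ri s) + l * (by_ (ri (S s)) - by_ (ri s)))); auto; try lia.
          rewrite e3 in *. pose proof (bylt (ri s) (S (ri s)) ltac:(lia) ltac:(lia)). split; nra.
        * apply (bynb (ri (S s)) (ri i) (by_ (ri s) + l * (by_ (ri (S s)) - by_ (ri s)))); auto; try lia.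
          rewrite e3 in *. pose proof (bylt (ri (S s)) (S (ri (S s))) ltac:(lia) ltac:(lia)). split; nra.
      + destruct e3 as [e3|e3].
        * apply (bynb (ri s) (ri j) (by_ (ri s) + l * (by_ (ri (S s)) - by_ (ri s)))); auto; try lia.
          rewrite e3 in *. pose proof (bylt (ri s) (S (ri s)) ltac:(lia) ltac:(lia)). split; nra.
        * apply (bynb (ri (S s)) (ri j) (by_ (ri s) + l * (by_ (ri (S s)) - by_ (ri s)))); auto; try lia.
          rewrite e3 in *. pose proof (bylt (ri (S s)) (S (ri (S s))) ltac:(lia) ltac:(lia)). split; nra.
    - rewrite <- e1. replace (by_ (ri s) + l * (by_ (ri s) - by_ (ri s))) with (by_ (ri s)) by ring.
      split. destruct e2 as [e2|e2]; rewrite e2; auto.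
      split; intro E; injection E; intros E2 E1.
      + destruct e3 as [e3|e3].
        * apply (axnb (ci s) (ci i) (ax (ci s) + l * (ax (ci (S s)) - ax (ci s)))); auto; try lia.
          rewrite e3 in *. pose proof (axlt (ci s) (S (ci s)) ltac:(lia) ltac:(lia)). split; nra.
        * apply (axnb (ci (S s)) (ci i) (ax (ci s) + l * (ax (ci (S s)) - ax (ci s)))); auto; try lia.
          rewrite e3 in *. pose proof (axlt (ci (S s)) (S (ci (S s))) ltac:(lia) ltac:(lia)). split; nra.
      + destruct e3 as [e3|e3].
        * apply (axnb (ci s) (ci j) (ax (ci s) + l * (ax (ci (S s)) - ax (ci s)))); auto; try lia.
          rewrite e3 in *. pose proof (axlt (ci s) (S (ci s)) ltac:(lia) ltac:(lia)). split; nra.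
        * apply (axnb (ci (S s)) (ci j) (ax (ci s) + l * (ax (ci (S s)) - ax (ci s)))); auto; try lia.
          rewrite e3 in *. pose proof (axlt (ci (S s)) (S (ci (S s))) ltac:(lia) ltac:(lia)). split; nra. }
  destruct HX as [bX [nX1 nX2]].
  apply (T3 x0 x1 y0 y1 (Pos i) (Pos j) X); try (apply Pos_in; auto); try (apply Pos_bd; auto); auto.
Qed.

Lemma g_self : g j = 0.
Proof. unfold g, cross; ring. Qed.

Lemma sign3 a b c : a * b > 0 -> b * c > 0 -> a * c > 0.
Proof. intros h1 h2. assert (a * b * (b * c) > 0) by (apply Rmult_gt_0_compat; auto).
  assert (b * b > 0) by nra. nra. Qed.

Lemma gF : (i < j)%nat -> (0 < j)%nat -> (S j < MM)%nat -> (j - 1)%nat <> i -> g (j - 1) * g (S j) < 0.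
Proof. intros hij h0 hS hne.
  assert (ga := gZ (j - 1) ltac:(lia) hne ltac:(lia)).
  assert (gb := gZ (S j) hS ltac:(lia) ltac:(lia)).
  destruct (I1 i hi) as [ci1 ri1].
  assert (iPi := Pos_in i hi).
  unfold inRR, inR, x0, x1, y0, y1 in iPi. unfold Pos in iPi, dx, dy. simpl in iPi, dx, dy.
  destruct (Nat.eq_dec j (Q + 1)) as [ej|nj1].
  { destruct I6a as [a1 [a2 [a3 [a4 [a5 a6]]]]].
    unfold g, cross, Pos; simpl. rewrite ej in dx, dy |- *. rewrite a1 in dx. rewrite a2 in dy.
    replace (Q + 1 - 1)%nat with Q by lia. replace (S (Q + 1)) with (Q + 2)%nat by lia.
    rewrite a1, a2, a3, a4, a5, a6.
    assert (ax 0 < ax (ci i)) by (destruct iPi as [[? ?] _]; lra).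
    assert (by_ (ri i) < by_ (Q + 1)) by (destruct iPi as [_ [? ?]]; lra).
    assert (by_ Q < by_ (Q + 1)) by (apply bylt; lia).
    assert (ax 0 < ax 1) by (apply axlt; lia).
    set (u := ax (ci i)) in *. set (v := by_ (ri i)) in *.
    set (X0 := ax 0) in *. set (Y1 := by_ (Q + 1)) in *. set (yQ := by_ Q) in *. set (a1x := ax 1) in *.
    replace ((X0 - u) * (yQ - v) - (Y1 - v) * (X0 - u)) with ((X0 - u) * (yQ - Y1)) by ring.
    replace ((X0 - u) * (Y1 - v) - (Y1 - v) * (a1x - u)) with ((Y1 - v) * (X0 - a1x)) by ring.
    assert (0 < (X0 - u) * (yQ - Y1)) by (apply Rmult_lt_0_compat_neg; lra) || nra.
    assert ((Y1 - v) * (X0 - a1x) < 0) by nra. nra. }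
  destruct (Nat.eq_dec j (Q + P + 2)) as [ej|nj2].
  { destruct I6b as [a1 [a2 [a3 [a4 [a5 a6]]]]].
    unfold g, cross, Pos; simpl. rewrite ej in dx, dy |- *. rewrite a1 in dx. rewrite a2 in dy.
    replace (Q + P + 2 - 1)%nat with (Q + P + 1)%nat by lia. replace (S (Q + P + 2)) with (Q + P + 3)%nat by lia.
    rewrite a1, a2, a3, a4, a5, a6.
    assert (ax (ci i) < ax (P + 1)) by (destruct iPi as [[? ?] _]; lra).
    assert (by_ (ri i) < by_ (Q + 1)) by (destruct iPi as [_ [? ?]]; lra).
    assert (by_ Q < by_ (Q + 1)) by (apply bylt; lia).
    assert (ax P < ax (P + 1)) by (apply axlt; lia).
    set (u := ax (ci i)) in *. set (v := by_ (ri i)) in *.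
    set (X1 := ax (P + 1)) in *. set (Y1 := by_ (Q + 1)) in *. set (yQ := by_ Q) in *. set (xP := ax P) in *.
    replace ((X1 - u) * (Y1 - v) - (Y1 - v) * (xP - u)) with ((Y1 - v) * (X1 - xP)) by ring.
    replace ((X1 - u) * (yQ - v) - (Y1 - v) * (X1 - u)) with ((X1 - u) * (yQ - Y1)) by ring.
    assert (0 < (Y1 - v) * (X1 - xP)) by nra.
    assert ((X1 - u) * (yQ - Y1) < 0) by nra. nra. }
  destruct (Nat.eq_dec j (2 * Q + P + 3)) as [ej|nj3].
  { destruct (I6c ltac:(lia)) as [a1 [a2 [a3 [a4 [a5 a6]]]]].
    unfold g, cross, Pos; simpl. rewrite ej in dx, dy |- *. rewrite a1 in dx. rewrite a2 in dy.
    replace (2 * Q + P + 3 - 1)%nat with (2 * Q + P + 2)%nat by lia. replace (S (2 * Q + P + 3)) with (2 * Q + P + 4)%nat by lia.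
    rewrite a1, a2, a3, a4, a5, a6.
    assert (ax (ci i) < ax (P + 1)) by (destruct iPi as [[? ?] _]; lra).
    assert (by_ 0 < by_ (ri i)) by (destruct iPi as [_ [? ?]]; lra).
    assert (by_ 0 < by_ 1) by (apply bylt; lia).
    assert (ax P < ax (P + 1)) by (apply axlt; lia).
    set (u := ax (ci i)) in *. set (v := by_ (ri i)) in *.
    set (X1 := ax (P + 1)) in *. set (Y0 := by_ 0) in *. set (y1' := by_ 1) in *. set (xP := ax P) in *.
    replace ((X1 - u) * (y1' - v) - (Y0 - v) * (X1 - u)) with ((X1 - u) * (y1' - Y0)) by ring.
    replace ((X1 - u) * (Y0 - v) - (Y0 - v) * (xP - u)) with ((Y0 - v) * (X1 - xP)) by ring.
    assert (0 < (X1 - u) * (y1' - Y0)) by nra.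
    assert ((Y0 - v) * (X1 - xP) < 0) by nra. nra. }
  assert (gj := g_self).
  destruct (I1 (j - 1) ltac:(lia)) as [c1 r1]. destruct (I1 j hj) as [c2 r2].
  destruct (I1 (S j) hS) as [c3 r3].
  assert (HL : exists l, 0 < l < 1 /\ Pos j = lerp (Pos (j - 1)) (Pos (S j)) l).
  { destruct (I5 j h0 hS nj1 nj2 nj3) as [[e1 [e2 e3]]|[e1 [e2 e3]]].
    - destruct (between_lerp (by_ (ri (j - 1))) (by_ (ri j)) (by_ (ri (S j)))) as [l [hl el]].
      { destruct e3 as [[f1 f2]|[f1 f2]]; [left|right]; rewrite ?f1, ?f2 in *; split; apply bylt; lia. }
      exists l; split; auto. unfold Pos, lerp; simpl. rewrite <- el, e1, <- e2. f_equal; ring.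
    - destruct (between_lerp (ax (ci (j - 1))) (ax (ci j)) (ax (ci (S j)))) as [l [hl el]].
      { destruct e3 as [[f1 f2]|[f1 f2]]; [left|right]; rewrite ?f1, ?f2 in *; split; apply axlt; lia. }
      exists l; split; auto. unfold Pos, lerp; simpl. rewrite <- el, e1, <- e2. f_equal; ring. }
  destruct HL as [l [hl el]].
  assert (gj' : (1 - l) * g (j - 1) + l * g (S j) = 0).
  { unfold g. rewrite <- cross_lerp, <- el. apply g_self. }
  apply (opp_sign _ _ l); auto.
Qed.

Lemma chain d s : (s + d < MM)%nat -> (forall t, (s <= t <= s + d)%nat -> t <> i /\ t <> j) ->
  g s * g (s + d) > 0.
Proof. revert s; induction d; intros s h1 h2.
  - rewrite Nat.add_0_r. destruct (h2 s ltac:(lia)). assert (g s <> 0) by (apply gZ; auto; lia).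
    assert (0 < g s * g s) by (apply Rsqr_pos_lt; auto). lra.
  - assert (A := IHd s ltac:(lia) ltac:(intros; apply h2; lia)).
    destruct (h2 (s + d)%nat ltac:(lia)), (h2 (S (s + d)) ltac:(lia)).
    assert (B := gC (s + d) ltac:(lia) H H0 H1 H2).
    replace (s + S d)%nat with (S (s + d)) by lia. apply (sign3 _ (g (s + d))); auto.
Qed.

Lemma gcross k l : (i < k)%nat -> (k < j)%nat -> (j < l)%nat -> (l < MM)%nat -> g k * g l < 0.
Proof. intros h1 h2 h3 h4.
  assert (A := chain (j - 1 - k) k ltac:(lia) ltac:(intros; lia)).
  replace (k + (j - 1 - k))%nat with (j - 1)%nat in A by lia.
  assert (B := chain (l - S j) (S j) ltac:(lia) ltac:(intros; lia)).
  replace (S j + (l - S j))%nat with l in B by lia.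
  assert (C := gF ltac:(lia) ltac:(lia) ltac:(lia) ltac:(lia)).
  assert (g k * g (j - 1) * (g (j - 1) * g (S j)) * (g (S j) * g l) < 0).
  { apply Rmult_neg_pos; [apply Rmult_pos_neg|]; lra. }
  assert (0 < g (j - 1) * g (j - 1)) by (apply Rsqr_pos_lt; intro E; rewrite E in C; lra).
  assert (0 < g (S j) * g (S j)) by (apply Rsqr_pos_lt; intro E; rewrite E in C; lra).
  replace (g k * g (j - 1) * (g (j - 1) * g (S j)) * (g (S j) * g l)) with
    ((g k * g l) * (g (j - 1) * g (j - 1)) * (g (S j) * g (S j))) in H by ring.
  destruct (Rlt_or_le (g k * g l) 0); auto.
  assert (0 <= g k * g l * (g (j - 1) * g (j - 1)) * (g (S j) * g (S j))).
  { apply Rmult_le_pos; [apply Rmult_le_pos|]; lra. }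
  lra.
Qed.

Lemma inters k l : (k < MM)%nat -> (l < MM)%nat -> g k * g l < 0 ->
  exists X, on_seg (Pos i) (Pos j) X /\ on_seg (Pos k) (Pos l) X.
Proof. intros hk hl h.
  assert (Hd : g k - g l <> 0).
  { intro E. assert (E2 : g k = g l) by lra. rewrite E2 in h. nra. }
  set (lam := g k / (g k - g l)).
  assert (Hl : 0 < lam < 1).
  { unfold lam. destruct (Rlt_or_le 0 (g k)) as [a|a].
    - assert (g l < 0) by nra. split. apply Rdiv_lt_0_compat; lra.
      apply (Rmult_lt_reg_r (g k - g l)); [lra|]. field_simplify; lra.
    - assert (g k < 0) by nra. assert (0 < g l) by nra.
      split. apply Rdiv_neg_neg; lra.
      apply (Rmult_lt_reg_r (g l - g k)); [lra|].
      replace (g k / (g k - g l) * (g l - g k)) with (- g k) by (field; lra). lra. }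
  exists (lerp (Pos k) (Pos l) lam). split.
  - apply (chord_on x0 x1 y0 y1); try (apply Pos_in; auto); try (apply Pos_bd; auto); auto.
    + apply inR_lerp; [apply Pos_in; auto | apply Pos_in; auto | lra].
    + rewrite cross_lerp. fold (g k) (g l). unfold lam; field; auto.
  - exists lam; split; auto; lra.
Qed.

End Chord.

Theorem ear_geo (mu : nat -> nat) :
  (forall s, (s < MM)%nat -> (mu s < MM)%nat) ->
  (forall s, (s < MM)%nat -> mu (mu s) = s) ->
  (forall s, (s < MM)%nat -> mu s <> s) ->
  (forall s, (s < MM)%nat -> fst (Pos s) <> fst (Pos (mu s)) /\ snd (Pos s) <> snd (Pos (mu s))) ->
  (forall s t, (s < MM)%nat -> (t < MM)%nat -> t <> s -> t <> mu s -> forall X,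
      on_seg (Pos s) (Pos (mu s)) X -> on_seg (Pos t) (Pos (mu t)) X -> False) -> False.
Proof.
  intros Hr Hi Hn Hd Hdis.
  apply (ear MM mu); auto.
  - unfold MM; lia.
  - intros s hs e. assert (hS : (S s < MM)%nat) by (rewrite <- e; auto).
    destruct (Hd s hs) as [d1 d2]. rewrite e in d1, d2.
    destruct (I4 s hS) as [[e1 _]|[e1 _]]; unfold Pos in d1, d2; simpl in d1, d2.
    + apply d1; rewrite e1; auto.
    + apply d2; rewrite e1; auto.
  - intros i k h1 h2 h3 h4.
    assert (hk : (k < MM)%nat) by lia. assert (hi : (i < MM)%nat) by lia.
    destruct (Hd i hi) as [d1 d2].
    assert (G := gcross i (mu i) hi (Hr i hi) d1 d2 k (mu k) h1 h2 h3 h4).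
    destruct (inters i (mu i) hi (Hr i hi) d1 d2 k (mu k) hk h4 G) as [X [X1 X2]].
    exact (Hdis i k hi hk ltac:(lia) ltac:(lia) X X1 X2).
Qed.

End Pos.

Open Scope nat_scope.


Definition cb (P : Prop) : bool := if excluded_middle_informative P then true else false.
Lemma cbT (P : Prop) : cb P = true <-> P.
Proof. unfold cb; destruct (excluded_middle_informative P); split; intros; auto; discriminate. Qed.
Lemma cbF (P : Prop) : cb P = false <-> ~ P.
Proof. unfold cb; destruct (excluded_middle_informative P); split; intros; auto; try discriminate; tauto. Qed.

Lemma filter_split {A} (f : A -> bool) (l : list A) :
  length (filter f l) + length (filter (fun x => negb (f x)) l) = length l.
Proof. induction l; simpl; auto. destruct (f a); simpl; lia. Qed.

Lemma filter_ext_in' {A} (f g : A -> bool) (l : list A) :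
  (forall x, In x l -> f x = g x) -> filter f l = filter g l.
Proof. apply filter_ext_in. Qed.

Lemma filter_or_le {A} (f g : A -> bool) (l : list A) :
  length (filter (fun x => f x || g x)%bool l) <= length (filter f l) + length (filter g l).
Proof. induction l; simpl; auto. destruct (f a), (g a); simpl; lia. Qed.

Lemma filter_le {A} (f : A -> bool) (l : list A) : length (filter f l) <= length l.
Proof. induction l; simpl; auto. destruct (f a); simpl; lia. Qed.

Lemma filter_all {A} (f : A -> bool) (l : list A) : (forall x, In x l -> f x = true) -> filter f l = l.
Proof. induction l; simpl; intros; auto. rewrite H; auto. f_equal; auto. Qed.

Lemma NoDup_map_on {A B} (f : A -> B) (l : list A) :
  NoDup l -> (forall x y, In x l -> In y l -> f x = f y -> x = y) -> NoDup (map f l).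
Proof. induction 1; simpl; intros; constructor.
  - intro Hin. apply in_map_iff in Hin. destruct Hin as [y [e hy]].
    assert (y = x) by (apply H1; auto). subst; auto.
  - apply IHNoDup; auto. Qed.

Lemma inj_le {A B} (f : A -> B) (l : list A) (l' : list B) :
  NoDup l -> (forall x y, In x l -> In y l -> f x = f y -> x = y) ->
  (forall x, In x l -> In (f x) l') -> length l <= length l'.
Proof. intros h1 h2 h3. rewrite <- (length_map f l). apply NoDup_incl_length.
  - apply NoDup_map_on; auto.
  - intros y hy. apply in_map_iff in hy. destruct hy as [x [e hx]]; subst; auto. Qed.

Lemma at_most_one (l : list nat) (f : nat -> bool) :
  NoDup l -> (forall x y, In x l -> In y l -> f x = true -> f y = true -> x = y) ->
  length (filter f l) <= 1.
Proof. intros hn h. induction l as [|a l IH]; simpl; auto.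
  inversion hn; subst. destruct (f a) eqn:E; simpl.
  - assert (filter f l = []).
    { destruct (filter f l) as [|b r] eqn:F; auto. exfalso.
      assert (In b (filter f l)) by (rewrite F; left; auto).
      apply filter_In in H. destruct H. assert (b = a) by (apply h; simpl; auto). subst; auto. }
    rewrite H; simpl; lia.
  - apply IH; auto. intros; apply h; simpl; auto. Qed.

Lemma filter_filter {A} (f g : A -> bool) (l : list A) :
  filter g (filter f l) = filter (fun x => f x && g x)%bool l.
Proof. induction l; simpl; auto. destruct (f a); simpl; auto. destruct (g a); simpl; rewrite IHl; auto. Qed.

Fixpoint cntf (F : nat -> nat) (d : nat) (S : list nat) : nat :=
  match S with [] => 0 | s :: r => (if Nat.eqb (F s) d then 1 else 0) + cntf F d r end%nat.

Lemma cntf_filter F d S : cntf F d S = length (filter (fun s => Nat.eqb (F s) d) S).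
Proof. induction S; simpl; auto. destruct (Nat.eqb (F a) d); simpl; lia. Qed.

Lemma fiber_le (F : nat -> nat) (D : list nat) : forall (S : list nat),
  NoDup D -> (forall s, In s S -> In (F s) D) -> (forall d, (cntf F d S <= 2)%nat) ->
  (length S <= 2 * length D)%nat.
Proof. induction D as [|d D IH]; intros S hD hin hc.
  - destruct S; simpl; auto. exfalso. apply (hin n); simpl; auto.
  - inversion hD; subst. simpl.
    pose proof (filter_split (fun s => Nat.eqb (F s) d) S).
    assert (length (filter (fun s => negb (Nat.eqb (F s) d)) S) <= 2 * length D)%nat.
    { apply IH; auto.
      - intros s hs. apply filter_In in hs. destruct hs as [h1 h2].
        destruct (hin s h1); auto. subst. rewrite Nat.eqb_refl in h2. discriminate.
      - intros d'. rewrite cntf_filter, filter_filter.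
        specialize (hc d'). rewrite cntf_filter in hc.
        eapply Nat.le_trans; [|apply hc].
        clear. induction S; simpl; auto. destruct (Nat.eqb (F a) d), (Nat.eqb (F a) d'); simpl; lia. }
    specialize (hc d). rewrite cntf_filter in hc. lia.
Qed.

Lemma fiber_tight (F : nat -> nat) (D : list nat) : forall (S : list nat),
  NoDup D -> (forall s, In s S -> In (F s) D) -> (forall d, (cntf F d S <= 2)%nat) ->
  length S = (2 * length D)%nat -> forall d, In d D -> cntf F d S = 2%nat.
Proof. induction D as [|d D IH]; intros S hD hin hc hl d' hd'.
  - destruct hd'.
  - inversion hD; subst. simpl in hl.
    pose proof (filter_split (fun s => Nat.eqb (F s) d) S) as Hs.
    assert (hin' : forall s, In s (filter (fun s => negb (Nat.eqb (F s) d)) S) -> In (F s) D).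
    { intros s hs. apply filter_In in hs. destruct hs as [h1 h2].
      destruct (hin s h1); auto. subst. rewrite Nat.eqb_refl in h2. discriminate. }
    assert (hc' : forall d', (cntf F d' (filter (fun s => negb (Nat.eqb (F s) d)) S) <= 2)%nat).
    { intros d'0. rewrite cntf_filter, filter_filter.
        specialize (hc d'0). rewrite cntf_filter in hc.
        eapply Nat.le_trans; [|apply hc].
        clear. induction S; simpl; auto. destruct (Nat.eqb (F a) d), (Nat.eqb (F a) d'0); simpl; lia. }
    pose proof (fiber_le F D _ H2 hin' hc') as Hle.
    pose proof (hc d) as Hcd. rewrite cntf_filter in Hcd.
    assert (E1 : length (filter (fun s => Nat.eqb (F s) d) S) = 2%nat) by lia.
    destruct hd' as [e|hd'].
    + subst. rewrite cntf_filter; auto.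
    + assert (E2 : length (filter (fun s => negb (Nat.eqb (F s) d)) S) = (2 * length D)%nat) by lia.
      pose proof (IH _ H2 hin' hc' E2 d' hd') as Hr.
      assert (d' <> d) by (intro; subst; auto).
      rewrite cntf_filter in Hr |- *. rewrite filter_filter in Hr.
      rewrite <- Hr. f_equal. apply filter_ext. intros a.
      destruct (Nat.eqb_spec (F a) d'); destruct (Nat.eqb_spec (F a) d); simpl; auto; congruence.
Qed.

Lemma filter_seq_sorted (f : nat -> bool) : forall n a,
  StronglySorted lt (filter f (seq a n)).
Proof. induction n; intros a; simpl. constructor.
  destruct (f a); simpl; auto. constructor; auto.
  apply Forall_forall. intros x hx. apply filter_In in hx. destruct hx as [hx _].
  apply in_seq in hx. lia. Qed.

Lemma sorted_nth (l : list nat) : StronglySorted lt l ->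
  forall r r', (r < r')%nat -> (r' < length l)%nat -> (nth r l 0 < nth r' l 0)%nat.
Proof. induction 1; intros r r' h1 h2; simpl in *. lia.
  destruct r, r'; try lia.
  - rewrite Forall_forall in H0. apply H0. apply nth_In. lia.
  - apply IHStronglySorted; lia. Qed.

Lemma cb_true (P : Prop) : cb P = true -> P.
Proof. apply cbT. Qed.
Lemma cb_intro (P : Prop) : P -> cb P = true.
Proof. apply cbT. Qed.
Lemma cb_false (P : Prop) : cb P = false -> ~ P.
Proof. apply cbF. Qed.
Lemma cb_introF (P : Prop) : ~ P -> cb P = false.
Proof. apply cbF. Qed.
Lemma cb_iff (P Q : Prop) : (P <-> Q) -> cb P = cb Q.
Proof. unfold cb. intros h. destruct (excluded_middle_informative P), (excluded_middle_informative Q);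
  auto; exfalso; tauto. Qed.

Open Scope nat_scope.

Lemma lerp_inj (a b : point) t t' : a <> b -> lerp a b t = lerp a b t' -> t = t'.
Proof. intros hab e. destruct a as [a1 a2], b as [b1 b2]; unfold lerp in e; simpl in e.
  injection e; intros e2 e1.
  destruct (Req_dec b1 a1).
  - assert (b2 <> a2) by (intro; apply hab; subst; f_equal; auto).
    assert ((t - t') * (b2 - a2) = 0)%R by lra. apply Rmult_integral in H1. destruct H1; lra.
  - assert ((t - t') * (b1 - a1) = 0)%R by lra. apply Rmult_integral in H0. destruct H0; lra.
Qed.

Lemma seg_x (a b X Y : point) : fst a <> fst b -> on_seg a b X -> on_seg a b Y -> fst X = fst Y -> X = Y.
Proof. intros h [t [ht ->]] [t' [ht' ->]]. unfold lerp; simpl. intro e.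
  assert ((t - t') * (fst b - fst a) = 0)%R by lra. apply Rmult_integral in H. destruct H.
  - assert (t = t') by lra. subst; auto.
  - lra. Qed.
Lemma seg_y (a b X Y : point) : snd a <> snd b -> on_seg a b X -> on_seg a b Y -> snd X = snd Y -> X = Y.
Proof. intros h [t [ht ->]] [t' [ht' ->]]. unfold lerp; simpl. intro e.
  assert ((t - t') * (snd b - snd a) = 0)%R by lra. apply Rmult_integral in H. destruct H.
  - assert (t = t') by lra. subst; auto.
  - lra. Qed.

Lemma seg_const_x (a b X : point) : fst a = fst b -> on_seg a b X -> fst X = fst b.
Proof. intros h [t [ht ->]]. unfold lerp; simpl. rewrite h; ring. Qed.
Lemma seg_const_y (a b X : point) : snd a = snd b -> on_seg a b X -> snd X = snd b.
Proof. intros h [t [ht ->]]. unfold lerp; simpl. rewrite h; ring. Qed.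

Lemma seg_conv (a b P Q X : point) : on_seg a b P -> on_seg a b Q -> on_seg P Q X -> on_seg a b X.
Proof. intros [t1 [h1 ->]] [t2 [h2 ->]] [l [hl ->]].
  exists (t1 + l * (t2 - t1))%R. split. nra. unfold lerp; simpl; f_equal; ring. Qed.

Lemma seg_end (a b P Q : point) : a <> b -> on_seg a b P -> on_seg a b Q -> on_seg P Q b -> b = P \/ b = Q.
Proof. intros hab [t1 [h1 ->]] [t2 [h2 ->]] [l [hl e]].
  assert (E : lerp a b 1 = lerp a b (t1 + l * (t2 - t1))).
  { rewrite e at 1. unfold lerp; simpl; f_equal; ring. }
  apply lerp_inj in E; auto.
  destruct (Req_dec l 0); [subst; left|].
  - assert (t1 = 1)%R by lra. subst. unfold lerp; destruct a, b; simpl; f_equal; ring.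
  - assert (t2 = 1)%R by nra. subst.  right. unfold lerp; destruct a, b; simpl; f_equal; ring.
Qed.

Lemma cross_lerp3 a b t1 t2 t3 : cross (lerp a b t1) (lerp a b t2) (lerp a b t3) = 0%R.
Proof. unfold cross, lerp; simpl; ring. Qed.

Lemma B2 x0 x1 y0 y1 (a b X Y Z : point) :
  fst a <> fst b -> snd a <> snd b ->
  on_seg a b X -> on_seg a b Y -> on_seg a b Z -> X <> Y -> X <> Z -> Y <> Z ->
  inR x0 x1 y0 y1 X -> inR x0 x1 y0 y1 Y -> inR x0 x1 y0 y1 Z ->
  onbd x0 x1 y0 y1 X -> onbd x0 x1 y0 y1 Y -> onbd x0 x1 y0 y1 Z -> False.
Proof. intros dx dy hX hY hZ n1 n2 n3 iX iY iZ bX bY bZ.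
  apply (T3 x0 x1 y0 y1 X Y Z); auto.
  - intro e; apply n1; apply (seg_x a b); auto.
  - intro e; apply n1; apply (seg_y a b); auto.
  - destruct hX as [t1 [_ ->]], hY as [t2 [_ ->]], hZ as [t3 [_ ->]]. apply cross_lerp3.
Qed.

Lemma coll2 (p0 p1 p2 Y1 Y2 Y3 : point) : fst p0 <> fst p1 -> cross p0 p1 p2 = 0%R ->
  on_seg p0 p1 Y1 -> on_seg p0 p1 Y2 -> on_seg p1 p2 Y3 -> cross Y1 Y2 Y3 = 0%R.
Proof. intros h c [t1 [_ ->]] [t2 [_ ->]] [t3 [_ ->]].
  pose proof (cross0_lerp p0 p1 p2 h c) as E.
  set (mu := ((fst p2 - fst p0) / (fst p1 - fst p0))%R) in E.
  assert (lerp p1 p2 t3 = lerp p0 p1 (1 + t3 * (mu - 1))%R).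
  { rewrite E at 1. unfold lerp; simpl; f_equal; ring. }
  unfold lerp in H. rewrite H. unfold cross; simpl; ring. Qed.

Lemma noncoll2 (p0 p1 p2 X : point) : cross p0 p1 p2 <> 0%R ->
  on_seg p0 p1 X -> on_seg p1 p2 X -> X = p1.
Proof. intros c [t [ht e1]] [s [hs e2]]. rewrite e1 in e2.
  destruct p0 as [a1 a2], p1 as [b1 b2], p2 as [c1 c2]. unfold lerp, cross in *; simpl in *.
  injection e2; intros ey ex.
  assert (E : ((1 - t) * ((b1 - a1) * (c2 - a2) - (b2 - a2) * (c1 - a1)) =
     - (((1 - t) * (a1 - b1) - s * (c1 - b1)) * (c2 - b2) - ((1 - t) * (a2 - b2) - s * (c2 - b2)) * (c1 - b1)))%R) by ring.
  assert (Z1 : ((1 - t) * (a1 - b1) - s * (c1 - b1))%R = 0%R) by lra.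
  assert (Z2 : ((1 - t) * (a2 - b2) - s * (c2 - b2))%R = 0%R) by lra.
  rewrite Z1, Z2 in E. assert (E' : ((1 - t) * ((b1 - a1) * (c2 - a2) - (b2 - a2) * (c1 - a1)))%R = 0%R) by lra.
  apply Rmult_integral in E'. destruct E' as [E'|E']; [|contradiction].
  assert (Ht1 : t = 1%R) by lra. rewrite e1, Ht1. f_equal; ring.
Qed.

Open Scope nat_scope.

Section PathC.
Variables (k : nat) (p : nat -> point).
Hypothesis hpp : polypath k p.

Definition segon i X := on_seg (p (i - 1)) (p i) X.
Definition constp (pr : point -> R) i := pr (p (i - 1)) = pr (p i).
Definition usedp (pr : point -> R) (c : nat) :=
  exists i, 1 <= i <= k /\ constp pr i /\ pr (p i) = INR c.

Lemma cb_or (P Q : Prop) : cb (P \/ Q) = (cb P || cb Q)%bool.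
Proof. unfold cb. destruct (excluded_middle_informative (P \/ Q)), (excluded_middle_informative P),
  (excluded_middle_informative Q); simpl; try reflexivity; exfalso; tauto. Qed.

Definition usel pr c := epsilon (inhabits 0) (fun i => 1 <= i <= k /\ constp pr i /\ pr (p i) = INR c).

Lemma usel_spec pr c : usedp pr c -> 1 <= usel pr c <= k /\ constp pr (usel pr c) /\ pr (p (usel pr c)) = INR c.
Proof. intros h. unfold usel. apply epsilon_spec. exact h. Qed.

Lemma U_le pr N :
  length (filter (fun c => cb (usedp pr c)) (seq 1 N)) <= length (filter (fun i => cb (constp pr i)) (seq 1 k)).
Proof. apply (inj_le (usel pr)).
  - apply NoDup_filter, seq_NoDup.
  - intros x y hx hy e. apply filter_In in hx, hy. destruct hx as [_ hx], hy as [_ hy].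
    apply cb_true in hx, hy. destruct (usel_spec pr x hx) as [_ [_ e1]], (usel_spec pr y hy) as [_ [_ e2]].
    rewrite e in e1. rewrite e1 in e2. apply INR_eq; auto.
  - intros x hx. apply filter_In in hx. destruct hx as [_ hx]. apply cb_true in hx.
    destruct (usel_spec pr x hx) as [h1 [h2 _]]. apply filter_In. split.
    + apply in_seq; lia.
    + apply cb_intro; auto.
Qed.

Definition cntU pr N j := length (filter (fun c => cb (exists i, 1 <= i <= j /\ constp pr i /\ pr (p i) = INR c)) (seq 1 N)).
Definition nv pr j := length (filter (fun i => negb (cb (constp pr i))) (seq 1 j)).
Definition ind pr j := match j with 0 => 0 | S _ => if cb (constp pr j) then 1 else 0 end.

Lemma sep_inv pr N : forall j, j <= k -> cntU pr N j <= nv pr j + ind pr j.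
Proof.
  induction j as [|j IH]; intros hj.
  - unfold cntU. rewrite (filter_ext_in _ (fun _ => false)). rewrite filter_false; simpl; lia.
    intros c _. apply cb_introF. intros [i [h _]]; lia.
  - specialize (IH ltac:(lia)).
    unfold nv. rewrite seq_S, filter_app. simpl.
    replace (1 + j) with (S j) by lia. rewrite length_app.
    fold (nv pr j).
    assert (Hpred : forall c, cb (exists i, 1 <= i <= S j /\ constp pr i /\ pr (p i) = INR c) =
        (cb (exists i, 1 <= i <= j /\ constp pr i /\ pr (p i) = INR c) ||
         cb (constp pr (S j) /\ pr (p (S j)) = INR c))%bool).
    { intros c. rewrite <- cb_or. apply cb_iff. split.
      - intros [i [h1 [h2 h3]]]. destruct (Nat.eq_dec i (S j)).
        + subst; right; auto.
        + left; exists i; repeat split; auto; lia.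
      - intros [[i [h1 [h2 h3]]]|[h2 h3]]; [exists i|exists (S j)]; repeat split; auto; lia. }
    unfold cntU. rewrite (filter_ext _ _ Hpred). fold (cntU pr N j) in IH.
    destruct (cb (constp pr (S j))) eqn:Ec; simpl.
    + apply cb_true in Ec.
      destruct j as [|j'].
      *
        eapply Nat.le_trans; [apply filter_or_le|].
        unfold cntU in IH. simpl in IH.
        assert (length (filter (fun c => cb (constp pr 1 /\ pr (p 1) = INR c)) (seq 1 N)) <= 1).
        { apply at_most_one. apply seq_NoDup. intros x y _ _ e1 e2. apply cb_true in e1, e2.
          destruct e1 as [_ e1], e2 as [_ e2]. rewrite e1 in e2. apply INR_eq; auto. }
        simpl in *. lia.
      * destruct (cb (constp pr (S j'))) eqn:Ec'.
        -- apply cb_true in Ec'. simpl in IH. rewrite (proj2 (cbT _) Ec') in IH.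
           assert (Heq : filter (fun c => (cb (exists i, 1 <= i <= S j' /\ constp pr i /\ pr (p i) = INR c) ||
              cb (constp pr (S (S j')) /\ pr (p (S (S j'))) = INR c))%bool) (seq 1 N) =
              filter (fun c => cb (exists i, 1 <= i <= S j' /\ constp pr i /\ pr (p i) = INR c)) (seq 1 N)).
           { apply filter_ext. intros c. destruct (cb (constp pr (S (S j')) /\ pr (p (S (S j'))) = INR c)) eqn:E3.
             - apply cb_true in E3. destruct E3 as [_ E3]. rewrite Bool.orb_true_r. symmetry. apply cb_intro.
               exists (S j'). repeat split; try lia; auto. rewrite <- E3. unfold constp in Ec.
               replace (S (S j') - 1) with (S j') in Ec by lia. auto.
             - rewrite Bool.orb_false_r. auto. }
           rewrite Heq. fold (cntU pr N (S j')). simpl. lia.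
        -- simpl in IH. rewrite Ec' in IH.
           eapply Nat.le_trans; [apply filter_or_le|].
           assert (length (filter (fun c => cb (constp pr (S (S j')) /\ pr (p (S (S j'))) = INR c)) (seq 1 N)) <= 1).
           { apply at_most_one. apply seq_NoDup. intros x y _ _ e1 e2. apply cb_true in e1, e2.
             destruct e1 as [_ e1], e2 as [_ e2]. rewrite e1 in e2. apply INR_eq; auto. }
           fold (cntU pr N (S j')). lia.
    + apply cb_false in Ec.
      assert (Heq : filter (fun c => (cb (exists i, 1 <= i <= j /\ constp pr i /\ pr (p i) = INR c) ||
              cb (constp pr (S j) /\ pr (p (S j)) = INR c))%bool) (seq 1 N) =
              filter (fun c => cb (exists i, 1 <= i <= j /\ constp pr i /\ pr (p i) = INR c)) (seq 1 N)).
      { apply filter_ext. intros c. replace (cb (constp pr (S j) /\ pr (p (S j)) = INR c)) with false.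
        - apply Bool.orb_false_r.
        - symmetry; apply cb_introF. tauto. }
      rewrite Heq. fold (cntU pr N j). destruct j; simpl in IH |- *; try destruct (cb (constp pr (S j))); lia.
Qed.

Lemma sep pr N : (forall c, 1 <= c <= N -> usedp pr c) -> 2 * N - 1 <= k.
Proof. intros hall.
  assert (A := sep_inv pr N k (le_n k)).
  assert (E : cntU pr N k = N).
  { unfold cntU. rewrite filter_all. apply length_seq. intros c hc. apply in_seq in hc.
    apply cb_intro. apply hall. lia. }
  assert (B := U_le pr N).
  rewrite filter_all in B. 2:{ intros c hc. apply in_seq in hc. apply cb_intro. apply hall. lia. }
  rewrite length_seq in B.
  pose proof (filter_split (fun i => cb (constp pr i)) (seq 1 k)) as C. rewrite length_seq in C.
  assert (I : ind pr k <= 1) by (unfold ind; destruct k; [lia|destruct (cb _); lia]).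
  unfold nv in A. cbv beta in C. lia.
Qed.

End PathC.

Open Scope nat_scope.

Section Main.
Variables (n m k : nat) (p : nat -> point).
Hypothesis hpp : polypath k p.
Hypothesis hcov : covers k p (grid n m).

Definition vb i := cb (constp p fst i).
Definition hb i := cb (constp p snd i).
Definition Al := filter (fun c => negb (cb (usedp k p fst c))) (seq 1 n).
Definition Bl := filter (fun c => negb (cb (usedp k p snd c))) (seq 1 m).
Definition Dl := filter (fun i => negb (vb i) && negb (hb i))%bool (seq 1 k).
Definition uu := length (filter (fun c => cb (usedp k p fst c)) (seq 1 n)).
Definition ww := length (filter (fun c => cb (usedp k p snd c)) (seq 1 m)).

Lemma not_vh i : 1 <= i <= k -> constp p fst i -> constp p snd i -> False.
Proof. intros hi h1 h2. destruct hpp as [_ hp]. apply (hp i hi). apply pair_eq; auto. Qed.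

Lemma k_split : length (filter vb (seq 1 k)) + length (filter hb (seq 1 k)) + length Dl = k.
Proof.
  pose proof (filter_split vb (seq 1 k)) as A. rewrite length_seq in A.
  pose proof (filter_split hb (filter (fun x => negb (vb x)) (seq 1 k))) as B.
  rewrite !filter_filter in B. unfold Dl.
  assert (E : filter (fun x => negb (vb x) && hb x)%bool (seq 1 k) = filter hb (seq 1 k)).
  { apply filter_ext_in. intros i hi. apply in_seq in hi. unfold vb, hb.
    destruct (cb (constp p snd i)) eqn:E2; destruct (cb (constp p fst i)) eqn:E1; simpl; auto.
    exfalso. apply cb_true in E1, E2. apply (not_vh i); auto; lia. }
  rewrite E in B. lia.
Qed.

Lemma u_split : uu + length Al = n.
Proof. unfold uu, Al. pose proof (filter_split (fun c => cb (usedp k p fst c)) (seq 1 n)).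
  rewrite length_seq in H. auto. Qed.
Lemma w_split : ww + length Bl = m.
Proof. unfold ww, Bl. pose proof (filter_split (fun c => cb (usedp k p snd c)) (seq 1 m)).
  rewrite length_seq in H. auto. Qed.

Lemma kge : uu + ww + length Dl <= k.
Proof. pose proof k_split. pose proof (U_le k p fst n). pose proof (U_le k p snd m).
  unfold uu, ww. unfold vb, hb in H. lia. Qed.

Lemma Al_spec c : In c Al <-> 1 <= c <= n /\ ~ usedp k p fst c.
Proof. unfold Al. rewrite filter_In, in_seq. split.
  - intros [h1 h2]. split; [lia|]. apply Bool.negb_true_iff in h2. apply cb_false; auto.
  - intros [h1 h2]. split; [lia|]. apply Bool.negb_true_iff. apply cb_introF; auto. Qed.
Lemma Bl_spec c : In c Bl <-> 1 <= c <= m /\ ~ usedp k p snd c.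
Proof. unfold Bl. rewrite filter_In, in_seq. split.
  - intros [h1 h2]. split; [lia|]. apply Bool.negb_true_iff in h2. apply cb_false; auto.
  - intros [h1 h2]. split; [lia|]. apply Bool.negb_true_iff. apply cb_introF; auto. Qed.
Lemma Dl_spec i : In i Dl -> 1 <= i <= k /\ fst (p (i - 1)) <> fst (p i) /\ snd (p (i - 1)) <> snd (p i).
Proof. unfold Dl. rewrite filter_In, in_seq. intros [h1 h2].
  apply Bool.andb_true_iff in h2. destruct h2 as [h2 h3].
  apply Bool.negb_true_iff in h2, h3. unfold vb, hb in *. apply cb_false in h2, h3.
  repeat split; try lia; auto. Qed.

Lemma cov_diag a b : In a Al -> In b Bl -> exists i, In i Dl /\ segon p i (INR a, INR b).
Proof. intros ha hb'. apply Al_spec in ha. apply Bl_spec in hb'.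
  destruct (hcov (INR a, INR b)) as [i [hi hs]].
  { exists a, b. repeat split; lia. }
  exists i. split; auto. unfold Dl. apply filter_In. split. apply in_seq; lia.
  apply Bool.andb_true_iff. split; apply Bool.negb_true_iff; apply cb_introF; intro hc.
  - apply (proj2 ha). exists i. repeat split; try lia; auto.
    symmetry. apply (seg_const_x _ _ _ hc hs).
  - apply (proj2 hb'). exists i. repeat split; try lia; auto.
    symmetry. apply (seg_const_y _ _ _ hc hs).
Qed.

Definition dsel a b := epsilon (inhabits 0) (fun i => In i Dl /\ segon p i (INR a, INR b)).
Lemma dsel_spec a b : In a Al -> In b Bl -> In (dsel a b) Dl /\ segon p (dsel a b) (INR a, INR b).
Proof. intros; unfold dsel; apply epsilon_spec; apply cov_diag; auto. Qed.

Definition al r := nth r Al 0.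
Definition be r := nth r Bl 0.
Lemma alm r r' : r < r' -> r' < length Al -> al r < al r'.
Proof. intros; apply sorted_nth; auto. apply filter_seq_sorted. Qed.
Lemma bem r r' : r < r' -> r' < length Bl -> be r < be r'.
Proof. intros; apply sorted_nth; auto. apply filter_seq_sorted. Qed.
Lemma al_in r : r < length Al -> In (al r) Al.
Proof. intros; apply nth_In; auto. Qed.
Lemma be_in r : r < length Bl -> In (be r) Bl.
Proof. intros; apply nth_In; auto. Qed.
Lemma al_inj r r' : r < length Al -> r' < length Al -> al r = al r' -> r = r'.
Proof. intros. destruct (Nat.lt_total r r') as [h|[h|h]]; auto;
  [pose proof (alm r r' h H0)|pose proof (alm r' r h H)]; lia. Qed.
Lemma be_inj r r' : r < length Bl -> r' < length Bl -> be r = be r' -> r = r'.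
Proof. intros. destruct (Nat.lt_total r r') as [h|[h|h]]; auto;
  [pose proof (bem r r' h H0)|pose proof (bem r' r h H)]; lia. Qed.

Lemma col_bound : 1 <= length Al -> length Bl <= length Dl.
Proof. intros h. rewrite <- (length_seq (length Bl) 0).
  apply (inj_le (fun r => dsel (al 0) (be r))).
  - apply seq_NoDup.
  - intros x y hx hy e. apply in_seq in hx, hy.
    destruct (dsel_spec (al 0) (be x) (al_in 0 ltac:(lia)) (be_in x ltac:(lia))) as [d1 s1].
    destruct (dsel_spec (al 0) (be y) (al_in 0 ltac:(lia)) (be_in y ltac:(lia))) as [d2 s2].
    rewrite e in d1, s1. destruct (Dl_spec _ d1) as [_ [dx _]].
    assert (E := seg_x _ _ _ _ dx s1 s2 eq_refl). injection E; intro E'.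
    apply INR_eq in E'. apply be_inj; auto; lia.
  - intros x hx. apply in_seq in hx. apply dsel_spec; [apply al_in|apply be_in]; lia.
Qed.

Lemma row_bound : 1 <= length Bl -> length Al <= length Dl.
Proof. intros h. rewrite <- (length_seq (length Al) 0).
  apply (inj_le (fun r => dsel (al r) (be 0))).
  - apply seq_NoDup.
  - intros x y hx hy e. apply in_seq in hx, hy.
    destruct (dsel_spec (al x) (be 0) (al_in x ltac:(lia)) (be_in 0 ltac:(lia))) as [d1 s1].
    destruct (dsel_spec (al y) (be 0) (al_in y ltac:(lia)) (be_in 0 ltac:(lia))) as [d2 s2].
    rewrite e in d1, s1. destruct (Dl_spec _ d1) as [_ [_ dy]].
    assert (E := seg_y _ _ _ _ dy s1 s2 eq_refl). injection E; intro E'.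
    apply INR_eq in E'. apply al_inj; auto; lia.
  - intros x hx. apply in_seq in hx. apply dsel_spec; [apply al_in|apply be_in]; lia.
Qed.

Section Tight.
Hypothesis hA : 2 <= length Al.
Hypothesis hB : 2 <= length Bl.
Definition PA := length Al - 2.
Definition QB := length Bl - 2.
Lemma alm' r r' : r < r' -> r' < PA + 2 -> al r < al r'.
Proof. intros; apply alm; unfold PA in *; lia. Qed.
Lemma bem' r r' : r < r' -> r' < QB + 2 -> be r < be r'.
Proof. intros; apply bem; unfold QB in *; lia. Qed.

Definition Ps s := Pos PA QB al be s.
Definition Fs s := dsel (al (ci PA QB s)) (be (ri PA QB s)).
Definition NM := MM PA QB.

Lemma Fs_spec s : s < NM -> In (Fs s) Dl /\ segon p (Fs s) (Ps s).
Proof. intros h. destruct (I1 PA QB s h) as [h1 h2]. unfold Fs, Ps, Pos, ax, by_.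
  apply dsel_spec; [apply al_in|apply be_in]; unfold PA, QB in *; lia. Qed.

Lemma Ps_in s : s < NM -> inRR PA QB al be (Ps s).
Proof. apply Pos_in; [apply alm'|apply bem']. Qed.
Lemma Ps_bd s : s < NM -> onbdR PA QB al be (Ps s).
Proof. apply Pos_bd. Qed.
Lemma Ps_inj s t : s < NM -> t < NM -> Ps s = Ps t -> s = t.
Proof. apply Pos_inj; [apply alm'|apply bem']. Qed.

Lemma three_contra d s1 s2 s3 : In d Dl -> s1 < NM -> s2 < NM -> s3 < NM ->
  s1 <> s2 -> s1 <> s3 -> s2 <> s3 ->
  segon p d (Ps s1) -> segon p d (Ps s2) -> segon p d (Ps s3) -> False.
Proof. intros hd h1 h2 h3 n12 n13 n23 g1 g2 g3.
  destruct (Dl_spec d hd) as [_ [dx dy]].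
  apply (B2 (x0 al) (x1 PA al) (y0 be) (y1 QB be) (p (d - 1)) (p d) (Ps s1) (Ps s2) (Ps s3)); auto;
    try (intro E; apply Ps_inj in E; auto);
    try (apply Ps_in; auto); try (apply Ps_bd; auto).
Qed.

Lemma fiber2 d : cntf Fs d (seq 0 NM) <= 2.
Proof. rewrite cntf_filter.
  destruct (filter (fun s => Nat.eqb (Fs s) d) (seq 0 NM)) as [|s1 [|s2 [|s3 r]]] eqn:E; simpl; try lia.
  exfalso.
  assert (ND : NoDup (s1 :: s2 :: s3 :: r)) by (rewrite <- E; apply NoDup_filter, seq_NoDup).
  assert (Hin : forall x, In x (s1 :: s2 :: s3 :: r) -> x < NM /\ Fs x = d).
  { intros x hx. rewrite <- E in hx. apply filter_In in hx. destruct hx as [h1 h2].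
    apply in_seq in h1. apply Nat.eqb_eq in h2. split; [lia|auto]. }
  destruct (Hin s1 ltac:(simpl; auto)) as [a1 b1].
  destruct (Hin s2 ltac:(simpl; auto)) as [a2 b2].
  destruct (Hin s3 ltac:(simpl; auto)) as [a3 b3].
  inversion ND as [|? ? N1 ND1]; subst. inversion ND1 as [|? ? N2 ND2]; subst.
  destruct (Fs_spec s1 a1) as [hd g1]. destruct (Fs_spec s2 a2) as [_ g2]. destruct (Fs_spec s3 a3) as [_ g3].
  rewrite b2 in g2. rewrite b3 in g3.
  apply (three_contra (Fs s1) s1 s2 s3); auto.
  - intro; subst; apply N1; simpl; auto.
  - intro; subst; apply N1; simpl; auto.
  - intro; subst; apply N2; simpl; auto.
Qed.

Lemma pos_bound : NM <= 2 * length Dl.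
Proof. rewrite <- (length_seq NM 0). apply (fiber_le Fs).
  - apply NoDup_filter, seq_NoDup.
  - intros s hs. apply in_seq in hs. apply Fs_spec; lia.
  - apply fiber2.
Qed.

Section Tight2.
Hypothesis HT : NM = 2 * length Dl.
Hypothesis HNC : noncrossing k p \/ k = 2.

Definition Lf s := filter (fun t => Nat.eqb (Fs t) (Fs s)) (seq 0 NM).
Lemma Lf_len s : s < NM -> length (Lf s) = 2.
Proof. intros h. unfold Lf. rewrite <- cntf_filter.
  apply (fiber_tight Fs Dl (seq 0 NM)).
  - unfold Dl; apply NoDup_filter, seq_NoDup.
  - intros x hx. apply in_seq in hx. apply Fs_spec; lia.
  - apply fiber2.
  - rewrite length_seq; auto.
  - apply Fs_spec; auto.
Qed.

Definition mu s := match Lf s with a :: b :: _ => if Nat.eqb a s then b else a | _ => s end.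

Lemma mu_spec s : s < NM -> mu s < NM /\ mu s <> s /\ Fs (mu s) = Fs s /\
  forall t, t < NM -> Fs t = Fs s -> t = s \/ t = mu s.
Proof. intros h. assert (L := Lf_len s h).
  assert (ND : NoDup (Lf s)) by (unfold Lf; apply NoDup_filter, seq_NoDup).
  assert (Hin : forall x, In x (Lf s) <-> x < NM /\ Fs x = Fs s).
  { intros x. unfold Lf. rewrite filter_In, in_seq, Nat.eqb_eq. split; intros [a b]; split; auto; lia. }
  assert (Hs : In s (Lf s)) by (apply Hin; auto).
  unfold mu. destruct (Lf s) as [|a [|b [|c r]]]; simpl in L; try lia.
  inversion ND as [|? ? N1 ND1]; subst.
  assert (ab : a <> b) by (intro; subst; apply N1; simpl; auto).
  destruct (Hin a) as [Ha _]. destruct (Ha ltac:(simpl; auto)) as [a1 a2].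
  destruct (Hin b) as [Hb _]. destruct (Hb ltac:(simpl; auto)) as [b1 b2].
  destruct (Nat.eqb_spec a s) as [e|e].
  - repeat split; auto. intro; subst; auto.
    intros t ht hf. assert (In t [a; b]) by (apply Hin; auto). destruct H as [|[|[]]]; subst; auto.
  - assert (sb : s = b) by (destruct Hs as [|[|[]]]; auto; contradiction).
    repeat split; auto.
    intros t ht hf. assert (In t [a; b]) by (apply Hin; auto). destruct H as [|[|[]]]; subst; auto.
Qed.

Lemma mu_inv s : s < NM -> mu (mu s) = s.
Proof. intros h. destruct (mu_spec s h) as [a [b [c d]]].
  destruct (mu_spec (mu s) a) as [a' [b' [c' d']]].
  destruct (d (mu (mu s)) a' ltac:(congruence)); auto. contradiction. Qed.

Lemma mu_diff s : s < NM -> fst (Ps s) <> fst (Ps (mu s)) /\ snd (Ps s) <> snd (Ps (mu s)).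
Proof. intros h. destruct (mu_spec s h) as [a [b [c _]]].
  destruct (Fs_spec s h) as [hd g1]. destruct (Fs_spec (mu s) a) as [_ g2]. rewrite c in g2.
  destruct (Dl_spec _ hd) as [_ [dx dy]].
  split; intro E.
  - apply b. symmetry. apply Ps_inj; auto. apply (seg_x _ _ _ _ dx g1 g2 E).
  - apply b. symmetry. apply Ps_inj; auto. apply (seg_y _ _ _ _ dy g1 g2 E).
Qed.

Lemma meet s t X : s < NM -> t < NM -> Fs s < Fs t ->
  on_seg (Ps s) (Ps (mu s)) X -> on_seg (Ps t) (Ps (mu t)) X -> False.
Proof. intros hs ht hlt c1 c2.
  destruct (mu_spec s hs) as [ms1 [ms2 [ms3 ms4]]].
  destruct (mu_spec t ht) as [mt1 [mt2 [mt3 mt4]]].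
  destruct (Fs_spec s hs) as [ds gs]. destruct (Fs_spec (mu s) ms1) as [_ gms]. rewrite ms3 in gms.
  destruct (Fs_spec t ht) as [dt gt]. destruct (Fs_spec (mu t) mt1) as [_ gmt]. rewrite mt3 in gmt.
  destruct (Dl_spec _ ds) as [rs [dxs dys]]. destruct (Dl_spec _ dt) as [rt [dxt dyt]].
  assert (Xs : segon p (Fs s) X) by (apply (seg_conv _ _ _ _ _ gs gms c1)).
  assert (Xt : segon p (Fs t) X) by (apply (seg_conv _ _ _ _ _ gt gmt c2)).
  assert (HX : X = p (Fs s)).
  { destruct HNC as [NC|K2].
    - destruct (NC (Fs s) (Fs t) ltac:(lia) hlt ltac:(lia) X Xs Xt); auto.
    - assert (E1 : Fs s = 1) by lia. assert (E2 : Fs t = 2) by lia.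
      rewrite E1 in Xs, gs, gms, dxs |- *. rewrite E2 in Xt, gt.
      unfold segon in *. simpl in Xs, gs, gms, Xt, gt, dxs.
      destruct (Req_dec (cross (p 0) (p 1) (p 2)) 0) as [C|C].
      + exfalso. assert (CC := coll2 _ _ _ _ _ _ dxs C gs gms gt).
        destruct (mu_diff s hs) as [d1 d2].
        apply (T3 (x0 al) (x1 PA al) (y0 be) (y1 QB be) (Ps s) (Ps (mu s)) (Ps t));
          try (apply Ps_in; auto); try (apply Ps_bd; auto); auto.
        * intro E. apply Ps_inj in E; auto. apply (f_equal Fs) in E; rewrite ?ms3 in E; lia.
        * intro E. apply Ps_inj in E; auto. apply (f_equal Fs) in E; rewrite ?ms3 in E; lia.
      + apply (noncoll2 _ _ _ _ C Xs Xt). }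
  assert (pne : p (Fs s - 1) <> p (Fs s)) by (destruct hpp as [_ hp]; apply hp; lia).
  rewrite HX in c1.
  destruct (seg_end _ _ _ _ pne gs gms c1) as [E|E].
  - apply (three_contra (Fs t) s t (mu t)); auto; try lia;
      try (intro E'; apply (f_equal Fs) in E'; rewrite ?ms3, ?mt3 in E'; lia);
      try (intro E'; apply mt2; auto).
    rewrite <- E, <- HX. auto.
  - apply (three_contra (Fs t) (mu s) t (mu t)); auto; try lia;
      try (intro E'; apply (f_equal Fs) in E'; rewrite ?ms3, ?mt3 in E'; lia);
      try (intro E'; apply mt2; auto).
    rewrite <- E, <- HX. auto.
Qed.

Lemma tight_false : False.
Proof.
  apply (ear_geo PA QB al be alm' bem' mu).
  - intros; apply mu_spec; auto.
  - apply mu_inv.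
  - intros; apply mu_spec; auto.
  - apply mu_diff.
  - intros s t hs ht n1 n2 X c1 c2.
    destruct (mu_spec s hs) as [_ [_ [_ U]]].
    assert (Fs s <> Fs t).
    { intro E. destruct (U t ht (eq_sym E)); auto. }
    destruct (Nat.lt_total (Fs s) (Fs t)) as [h|[h|h]]; [| contradiction |].
    + apply (meet s t X); auto.
    + apply (meet t s X); auto.
Qed.

End Tight2.
End Tight.

End Main.

Open Scope nat_scope.

Theorem LB n m k p : 1 <= n -> 1 <= m -> polypath k p -> covers k p (grid n m) ->
  2 * n - 1 <= k \/ 2 * m - 1 <= k \/ n + m - 1 <= k \/
  (n + m - 2 <= k /\ (k = n + m - 2 -> noncrossing k p \/ k = 2 -> False)).
Proof. intros hn hm hpp hcov.
  pose proof (u_split n k p) as US. pose proof (w_split m k p) as WS.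
  pose proof (kge n m k p hpp) as KG.
  destruct (Nat.eq_dec (length (Al n k p)) 0) as [A0|A0].
  { left. apply (sep k p hpp fst n). intros c hc.
    destruct (classic (usedp k p fst c)) as [h|h]; auto. exfalso.
    assert (In c (Al n k p)) by (apply Al_spec; auto).
    destruct (Al n k p); [destruct H|simpl in A0; lia]. }
  destruct (Nat.eq_dec (length (Bl m k p)) 0) as [B0|B0].
  { right; left. apply (sep k p hpp snd m). intros c hc.
    destruct (classic (usedp k p snd c)) as [h|h]; auto. exfalso.
    assert (In c (Bl m k p)) by (apply Bl_spec; auto).
    destruct (Bl m k p); [destruct H|simpl in B0; lia]. }
  destruct (Nat.eq_dec (length (Al n k p)) 1) as [A1|A1].
  { right; right; left. pose proof (col_bound n m k p hcov ltac:(lia)). lia. }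
  destruct (Nat.eq_dec (length (Bl m k p)) 1) as [B1|B1].
  { right; right; left. pose proof (row_bound n m k p hcov ltac:(lia)). lia. }
  right; right; right.
  assert (hA : 2 <= length (Al n k p)) by lia. assert (hB : 2 <= length (Bl m k p)) by lia.
  pose proof (pos_bound n m k p hcov hA hB) as PB.
  unfold NM, MM, PA, QB in PB.
  split; [lia|]. intros hk hnc.
  apply (tight_false n m k p hpp hcov hA hB); auto.
  unfold NM, MM, PA, QB. lia.
Qed.

Open Scope nat_scope.

Section ZZ.
Variables (M : nat).
Hypothesis hM : 1 <= M.

Definition Yc (c : nat) : R := if Nat.even c then 1%R else (INR M + 1)%R.
Definition zz (i : nat) : point := (INR (i / 2 + 1), Yc ((i + 1) / 2)).

Lemma div2_even c : (2 * c) / 2 = c.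
Proof. rewrite Nat.mul_comm. apply Nat.div_mul. lia. Qed.
Lemma div2_odd c : (2 * c + 1) / 2 = c.
Proof. symmetry. apply (Nat.div_unique _ 2 c 1); lia. Qed.

Lemma zz_even c : zz (2 * c) = (INR (c + 1), Yc c).
Proof. unfold zz. rewrite div2_even, div2_odd. auto. Qed.
Lemma zz_odd c : zz (2 * c + 1) = (INR (c + 1), Yc (c + 1)).
Proof. unfold zz. rewrite div2_odd. replace (2 * c + 1 + 1) with (2 * (c + 1)) by lia.
  rewrite div2_even. auto. Qed.

Lemma INR_M_pos : (0 < INR M)%R.
Proof. apply lt_0_INR; lia. Qed.

Lemma Yc_next c : Yc c <> Yc (c + 1).
Proof. unfold Yc. rewrite Nat.add_1_r, Nat.even_succ, <- Nat.negb_even.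
  pose proof INR_M_pos. destruct (Nat.even c); simpl; lra. Qed.
Lemma Yc_range c : Yc c = 1%R \/ Yc c = (INR M + 1)%R.
Proof. unfold Yc; destruct (Nat.even c); auto. Qed.

Lemma par i : 1 <= i -> exists c, i = 2 * c + 1 \/ i = 2 * c + 2.
Proof. intros h. destruct (Nat.Even_or_Odd i) as [[c e]|[c e]].
  - exists (c - 1). right. lia.
  - exists c. left. lia. Qed.

Lemma segV c X : on_seg (zz (2 * c)) (zz (2 * c + 1)) X -> fst X = INR (c + 1).
Proof. rewrite zz_even, zz_odd. intros [t [ht ->]]. simpl. ring. Qed.
Lemma segH c X : on_seg (zz (2 * c + 1)) (zz (2 * c + 2)) X ->
  snd X = Yc (c + 1) /\ (INR (c + 1) <= fst X <= INR (c + 2))%R.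
Proof. replace (2 * c + 2) with (2 * (c + 1)) by lia. rewrite zz_even, zz_odd.
  intros [t [ht ->]]. simpl. replace (c + 1 + 1) with (c + 2) by lia.
  rewrite !plus_INR. simpl. split; [ring|]. split; nra. Qed.

Lemma zz_poly N : 1 <= N -> polypath (2 * N - 1) zz.
Proof. intros hN. split; [lia|]. intros i hi.
  destruct (par i ltac:(lia)) as [c [e|e]]; subst.
  - replace (2 * c + 1 - 1) with (2 * c) by lia. rewrite zz_even, zz_odd.
    intro E. apply (f_equal snd) in E. simpl in E. apply (Yc_next c); auto.
  - replace (2 * c + 2 - 1) with (2 * c + 1) by lia. replace (2 * c + 2) with (2 * (c + 1)) by lia.
    rewrite zz_even, zz_odd. intro E. apply (f_equal fst) in E. simpl in E. apply INR_eq in E. lia.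
Qed.

Lemma zz_cov N : covers (2 * N - 1) zz (grid N M).
Proof. intros X [a [b [ha [hb ->]]]].
  exists (2 * (a - 1) + 1). split; [lia|].
  replace (2 * (a - 1) + 1 - 1) with (2 * (a - 1)) by lia.
  rewrite zz_even, zz_odd. replace (a - 1 + 1) with a by lia.
  assert (HM := INR_M_pos).
  assert (hb1 : (1 <= INR b <= INR M)%R) by (split; [apply (le_INR 1)|apply le_INR]; lia).
  destruct (Yc_range (a - 1)) as [e1|e1]; destruct (Yc_range a) as [e2|e2].
  - exfalso. apply (Yc_next (a - 1)). replace (a - 1 + 1) with a by lia. congruence.
  - exists ((INR b - 1) / INR M)%R. split.
    + split; [unfold Rdiv; apply Rmult_le_pos; [lra| left; apply Rinv_0_lt_compat; lra]|]. apply (Rmult_le_reg_r (INR M)); auto.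
      field_simplify; lra.
    + rewrite e1, e2. simpl. f_equal; field; lra.
  - exists ((INR M + 1 - INR b) / INR M)%R. split.
    + split; [unfold Rdiv; apply Rmult_le_pos; [lra| left; apply Rinv_0_lt_compat; lra]|]. apply (Rmult_le_reg_r (INR M)); auto.
      field_simplify; lra.
    + rewrite e1, e2. simpl. f_equal; field; lra.
  - exfalso. apply (Yc_next (a - 1)). replace (a - 1 + 1) with a by lia. congruence.
Qed.

Lemma zz_nc N : noncrossing (2 * N - 1) zz.
Proof. intros i j hi hij hj X h1 h2.
  destruct (par i hi) as [c [ei|ei]]; destruct (par j ltac:(lia)) as [d [ej|ej]]; subst.
  - replace (2 * c + 1 - 1) with (2 * c) in h1 by lia. replace (2 * d + 1 - 1) with (2 * d) in h2 by lia.
    apply segV in h1, h2. rewrite h1 in h2. apply INR_eq in h2. lia.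
  - replace (2 * c + 1 - 1) with (2 * c) in h1 by lia. replace (2 * d + 2 - 1) with (2 * d + 1) in h2 by lia.
    apply segV in h1. apply segH in h2. destruct h2 as [y2 [x1 x2]]. rewrite h1 in x1, x2.
    assert (c = d).
    { apply INR_le in x1. apply INR_le in x2. lia. }
    subst. split; [lia|]. rewrite zz_odd. apply pair_eq; simpl; auto.
  - replace (2 * c + 2 - 1) with (2 * c + 1) in h1 by lia. replace (2 * d + 1 - 1) with (2 * d) in h2 by lia.
    apply segH in h1. apply segV in h2. destruct h1 as [y1 [x1 x2]]. rewrite h2 in x1, x2.
    apply INR_le in x1. apply INR_le in x2. assert (d = c + 1) by lia. subst.
    split; [lia|]. replace (2 * c + 2) with (2 * (c + 1)) by lia. rewrite zz_even.
    apply pair_eq; simpl; auto; rewrite h2; f_equal; lia.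
  - replace (2 * c + 2 - 1) with (2 * c + 1) in h1 by lia. replace (2 * d + 2 - 1) with (2 * d + 1) in h2 by lia.
    apply segH in h1, h2. destruct h1 as [y1 [x1 x2]], h2 as [y2 [x3 x4]].
    assert (Hd : d = c + 1).
    { assert (INR (d + 1) <= INR (c + 2))%R by lra. apply INR_le in H. lia. }
    subst. exfalso. apply (Yc_next (c + 1)). congruence.
Qed.

End ZZ.

Open Scope nat_scope.

Definition sw (X : point) : point := (snd X, fst X).
Lemma sw_sw X : sw (sw X) = X. Proof. destruct X; reflexivity. Qed.
Lemma sw_seg a b X : on_seg a b X -> on_seg (sw a) (sw b) (sw X).
Proof. intros [t [ht ->]]. exists t; split; auto. Qed.
Lemma sw_seg' a b X : on_seg (sw a) (sw b) X -> on_seg a b (sw X).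
Proof. intros h. rewrite <- (sw_sw a), <- (sw_sw b). apply sw_seg; auto. Qed.

Lemma sw_poly k p : polypath k p -> polypath k (fun i => sw (p i)).
Proof. intros [h1 h2]. split; auto. intros i hi E. apply (h2 i hi).
  rewrite <- (sw_sw (p (i - 1))), <- (sw_sw (p i)), E. auto. Qed.
Lemma sw_cov k p n m : covers k p (grid m n) -> covers k (fun i => sw (p i)) (grid n m).
Proof. intros h X [a [b [ha [hb ->]]]].
  destruct (h (INR b, INR a)) as [i [hi hs]]. { exists b, a; auto. }
  exists i; split; auto. apply (sw_seg _ _ _ hs). Qed.
Lemma sw_nc k p : noncrossing k p -> noncrossing k (fun i => sw (p i)).
Proof. intros h i j h1 h2 h3 X s1 s2.
  apply sw_seg' in s1, s2. destruct (h i j h1 h2 h3 _ s1 s2) as [e1 e2]. split; auto.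
  rewrite <- (sw_sw X), e2. auto. Qed.

(* spiral *)
Definition TT (n : nat) (X : point) : point := (INR n + 1 - fst X, INR n + 2 - snd X)%R.
Lemma TT_TT n X : TT n (TT n X) = X.
Proof. destruct X; unfold TT; simpl; f_equal; ring. Qed.
Lemma TT_seg n a b X : on_seg a b X -> on_seg (TT n a) (TT n b) (TT n X).
Proof. intros [t [ht ->]]. exists t; split; auto. unfold TT; simpl; f_equal; ring. Qed.

Definition SP (n : nat) := exists p c, polypath (2 * n - 2) p /\ covers (2 * n - 2) p (grid n n) /\
  p (2 * n - 3) = (c, 1%R) /\ (INR n <= c)%R /\ p (2 * n - 2) = (1%R, 1%R).

Definition base3 (i : nat) : point :=
  match i with 0 => (3, 3)%R | 1 => (1, 1)%R | 2 => (1, 4)%R | 3 => (4, 1)%R | _ => (1, 1)%R end.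

Lemma SP3 : SP 3.
Proof. exists base3, 4%R. simpl. split; [|split; [|split; [|split]]].
  - split; [lia|]. intros i hi. destruct i as [|[|[|[|[|i]]]]]; try lia; simpl;
      intro E; injection E; intros; lra.
  - intros X [a [b [ha [hb ->]]]].
    assert (Ha : a = 1 \/ a = 2 \/ a = 3) by lia. assert (Hb : b = 1 \/ b = 2 \/ b = 3) by lia.
    destruct Ha as [Ha|[Ha|Ha]]; destruct Hb as [Hb|[Hb|Hb]]; subst a b; simpl.
    + exists 2; split; [lia|]. exists 0%R; split; [lra|]. simpl; f_equal; ring.
    + exists 2; split; [lia|]. exists (1/3)%R; split; [lra|]. simpl; f_equal; field.
    + exists 2; split; [lia|]. exists (2/3)%R; split; [lra|]. simpl; f_equal; field.
    + exists 4; split; [lia|]. exists (2/3)%R; split; [lra|]. simpl; f_equal; field.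
    + exists 1; split; [lia|]. exists (1/2)%R; split; [lra|]. simpl; f_equal; field.
    + exists 3; split; [lia|]. exists (1/3)%R; split; [lra|]. simpl; f_equal; field.
    + exists 4; split; [lia|]. exists (1/3)%R; split; [lra|]. simpl; f_equal; field.
    + exists 3; split; [lia|]. exists (2/3)%R; split; [lra|]. simpl; f_equal; field.
    + exists 1; split; [lia|]. exists 0%R; split; [lra|]. simpl; f_equal; ring.
  - reflexivity.
  - simpl. lra.
  - reflexivity.
Qed.

Lemma SP_step n : 3 <= n -> SP n -> SP (S n).
Proof. intros hn [p [c [hp [hc [e1 [ec e2]]]]]].
  set (k := 2 * n - 2).
  set (q := fun i => if (i <? k)%nat then p i else if (i =? k)%nat then (0, 1)%R
                     else if (i =? k + 1)%nat then (0, INR n + 1)%R else (INR n, INR n + 1)%R).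
  assert (qlt : forall i, i < k -> q i = p i) by (intros i h; unfold q; destruct (Nat.ltb_spec i k); auto; lia).
  assert (qk : q k = (0, 1)%R) by (unfold q; destruct (Nat.ltb_spec k k); [lia|]; rewrite Nat.eqb_refl; auto).
  assert (qk1 : q (k + 1) = (0, INR n + 1)%R).
  { unfold q; destruct (Nat.ltb_spec (k + 1) k); [lia|]. destruct (Nat.eqb_spec (k + 1) k); [lia|].
    rewrite Nat.eqb_refl; auto. }
  assert (qk2 : q (k + 2) = (INR n, INR n + 1)%R).
  { unfold q; destruct (Nat.ltb_spec (k + 2) k); [lia|]. destruct (Nat.eqb_spec (k + 2) k); [lia|].
    destruct (Nat.eqb_spec (k + 2) (k + 1)); [lia|]. auto. }
  assert (hn' : (3 <= INR n)%R) by (replace 3%R with (INR 3) by (simpl; ring); apply le_INR; lia).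
  exists (fun i => TT n (q i)), (INR (S n)).
  replace (2 * S n - 2) with (k + 2) by (unfold k; lia).
  replace (2 * S n - 3) with (k + 1) by (unfold k; lia).
  split; [|split; [|split; [|split]]].
  - split; [lia|]. intros i hi E.
    assert (E' : q (i - 1) = q i) by (rewrite <- (TT_TT n (q (i - 1))), E, TT_TT; auto).
    destruct hp as [_ hp].
    destruct (Nat.lt_ge_cases i k).
    + rewrite !qlt in E' by lia. apply (hp i); auto; unfold k in *; lia.
    + assert (Hi3 : i = k \/ i = k + 1 \/ i = k + 2) by lia.
      destruct Hi3 as [Hi3|[Hi3|Hi3]]; rewrite Hi3 in E'.
      * rewrite qlt in E' by (unfold k; lia). rewrite qk in E'. unfold k in E'.
        replace (2 * n - 2 - 1) with (2 * n - 3) in E' by lia. rewrite e1 in E'.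
        injection E'; intros; lra.
      * replace (k + 1 - 1) with k in E' by lia. rewrite qk, qk1 in E'. injection E'; intros; lra.
      * replace (k + 2 - 1) with (k + 1) in E' by lia. rewrite qk1, qk2 in E'. injection E'; intros; lra.
  - intros X' [a' [b' [ha [hb ->]]]].
    try rewrite S_INR in *.
    assert (Hc : exists i, 1 <= i <= k + 2 /\ on_seg (q (i - 1)) (q i) (TT n (INR a', INR b'))).
    { unfold TT; simpl.
      destruct (Nat.eq_dec a' (S n)) as [ea|na].
      - exists (k + 1). split; [lia|]. replace (k + 1 - 1) with k by lia. rewrite qk, qk1.
        subst a'. rewrite S_INR.
        assert (1 <= INR b' <= INR n + 1)%R by (rewrite <- S_INR; split; [apply (le_INR 1)|apply le_INR]; lia).
        exists ((INR n + 1 - INR b') / INR n)%R. split.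
        + split. unfold Rdiv; apply Rmult_le_pos; [lra|left; apply Rinv_0_lt_compat; lra].
          apply (Rmult_le_reg_r (INR n)); [lra|]. field_simplify; lra.
        + simpl; f_equal; field; lra.
      - destruct (Nat.eq_dec b' 1) as [eb|nb].
        + exists (k + 2). split; [lia|]. replace (k + 2 - 1) with (k + 1) by lia. rewrite qk1, qk2.
          subst b'. simpl.
          assert (1 <= INR a' <= INR n)%R by (split; [apply (le_INR 1)|apply le_INR]; lia).
          exists ((INR n + 1 - INR a') / INR n)%R. split.
          * split. unfold Rdiv; apply Rmult_le_pos; [lra|left; apply Rinv_0_lt_compat; lra].
            apply (Rmult_le_reg_r (INR n)); [lra|]. field_simplify; lra.
          * simpl; f_equal; field; lra.
        + destruct (hc (INR (n + 1 - a'), INR (n + 2 - b'))) as [i [hi hs]].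
          { exists (n + 1 - a'), (n + 2 - b'). repeat split; lia. }
          rewrite !minus_INR in hs by lia. rewrite !plus_INR in hs. simpl in hs.
          replace (1 + 1)%R with 2%R in hs by ring.
          destruct (Nat.lt_ge_cases i k).
          * exists i. split; [lia|]. rewrite !qlt by lia. auto.
          * assert (i = k) by (unfold k in *; lia). subst i.
            exists k. split; [lia|]. rewrite qk, qlt by lia.
            unfold k in hs |- *. replace (2 * n - 2 - 1) with (2 * n - 3) in hs |- * by lia.
            rewrite e1 in hs |- *. rewrite e2 in hs.
            destruct hs as [t [ht E]]. injection E; intros Ey Ex. simpl in Ex, Ey.
            exists (t * (c - 1) / c)%R. split.
            -- split. unfold Rdiv; apply Rmult_le_pos; [nra|left; apply Rinv_0_lt_compat; lra].
               apply (Rmult_le_reg_r c); [lra|]. field_simplify; nra.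
            -- simpl. f_equal; [|lra]. rewrite Ex. field. lra. }
    destruct Hc as [i [hi hs]]. exists i. split; auto.
    rewrite <- (TT_TT n (INR a', INR b')). apply TT_seg; auto.
  - rewrite qk1. unfold TT; cbn [fst snd]. rewrite S_INR. f_equal; ring.
  - lra.
  - rewrite qk2. unfold TT; simpl. f_equal; ring.
Qed.

Lemma SP_all n : 3 <= n -> SP n.
Proof. intros h. induction n as [|n IH]; [lia|].
  destruct (Nat.eq_dec n 2) as [E|ne]; [subst n; apply SP3|]. apply SP_step; [lia|apply IH; lia]. Qed.

Open Scope nat_scope.

Lemma ZZex n m : 1 <= n -> 1 <= m -> exists p, polypath (2 * Nat.min n m - 1) p /\
  noncrossing (2 * Nat.min n m - 1) p /\ covers (2 * Nat.min n m - 1) p (grid n m).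
Proof. intros hn hm. destruct (Nat.le_gt_cases n m).
  - rewrite Nat.min_l by lia. exists (zz m). split; [apply zz_poly; auto|split; [apply zz_nc|apply zz_cov]]; auto.
  - rewrite Nat.min_r by lia. exists (fun i => sw (zz n i)).
    split; [apply sw_poly, zz_poly; auto|split; [apply sw_nc, zz_nc|apply sw_cov, zz_cov]]; auto.
Qed.

Theorem theorem3 (n m : nat) (hn : (1 <= n)%nat) (hm : (1 <= m)%nat) :
  min_cover_segments (grid n m)
    (if (Nat.eqb n m && Nat.leb 3 n)%bool
     then (2 * Nat.min n m - 2)%nat
     else (2 * Nat.min n m - 1)%nat)
  /\ min_noncrossing_cover_segments (grid n m) (2 * Nat.min n m - 1)%nat.
Proof.
  split; [split|split].
  - destruct (Nat.eqb_spec n m) as [e|e]; destruct (Nat.leb_spec 3 n) as [l|l]; simpl.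
    + subst m. rewrite Nat.min_id. destruct (SP_all n l) as [p [c [h1 [h2 _]]]]. exists p; auto.
    + destruct (ZZex n m hn hm) as [p [h1 [_ h3]]]. exists p; auto.
    + destruct (ZZex n m hn hm) as [p [h1 [_ h3]]]. exists p; auto.
    + destruct (ZZex n m hn hm) as [p [h1 [_ h3]]]. exists p; auto.
  - intros k p hp hc. destruct (LB n m k p hn hm hp hc) as [A|[A|[A|[A B]]]];
      destruct (Nat.eqb_spec n m) as [e|e]; destruct (Nat.leb_spec 3 n) as [l|l]; simpl; try lia.
    subst m. destruct hp as [hk _].
    destruct (Nat.eq_dec k (n + n - 2)) as [ek|ek]; [|lia].
    exfalso. apply B; auto. right. lia.
  - destruct (ZZex n m hn hm) as [p [h1 [h2 h3]]]. exists p; auto.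
  - intros k p hp hnc hc. destruct (LB n m k p hn hm hp hc) as [A|[A|[A|[A B]]]]; try lia.
    destruct (Nat.eq_dec k (n + m - 2)) as [ek|ek].
    + exfalso. apply B; auto.
    + destruct hp as [hk _]. lia.
Qed.
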